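(* Let $F\in\mathrm{Lip}_{\rm loc}(\mathbb{R})$ satisfy $F(p)=p$ for $p\in[0,1]$ and $F(p)\le p$ for $p\in[-1,0]$, and let $g(x)=\max\{1-|x|,0\}$ for $x\in\mathbb{R}$. For $\varepsilon>0$ let $u^\varepsilon$ be the viscosity solution of $u^\varepsilon_t+F(u^\varepsilon_x)=\varepsilon u^\varepsilon_{xx}$ in $\mathbb{R}\times(0,\infty)$, $u^\varepsilon(x,0)=g(x)$, and let $u$ be the viscosity solution of $u_t+F(u_x)=0$ in $\mathbb{R}\times(0,\infty)$, $u(x,0)=g(x)$. Then for every $\varepsilon\in(0,\tfrac14)$, \[ |u^\varepsilon(0,1)-u(0,1)|\ge \frac{\mathrm{e}-1}{\sqrt{\pi}\,\mathrm{e}}\sqrt{\varepsilon}. \] *)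

(* Defs.v *)
From Stdlib Require Import Reals.
Open Scope R_scope.

Definition loc_lipschitz (F : R -> R) : Prop :=
  forall M : R, exists L : R, forall p q : R,
    Rabs p <= M -> Rabs q <= M -> Rabs (F p - F q) <= L * Rabs (p - q).

Definition g (x : R) : R := Rmax (1 - Rabs x) 0.

Definition continuous2 (f : R -> R -> R) : Prop :=
  forall x t eps, 0 < eps -> exists d, 0 < d /\
    forall y s, Rabs (y - x) < d -> Rabs (s - t) < d ->
      Rabs (f y s - f x t) < eps.

Definition BUC_half (u : R -> R -> R) : Prop :=
  (exists M, forall x t, 0 <= t -> Rabs (u x t) <= M) /\
  (forall eps, 0 < eps -> exists d, 0 < d /\
    forall x t y s, 0 <= t -> 0 <= s -> Rabs (y - x) < d -> Rabs (s - t) < d ->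
      Rabs (u y s - u x t) < eps).

Definition C1_with (phi phit phix : R -> R -> R) : Prop :=
  (forall x t, derivable_pt_lim (fun s => phi x s) t (phit x t)) /\
  (forall x t, derivable_pt_lim (fun y => phi y t) x (phix x t)) /\
  continuous2 phi /\ continuous2 phit /\ continuous2 phix.

Definition C12_with (phi phit phix phixx : R -> R -> R) : Prop :=
  C1_with phi phit phix /\
  (forall x t, derivable_pt_lim (fun y => phix y t) x (phixx x t)) /\
  continuous2 phixx.

Definition loc_max_at (u phi : R -> R -> R) (x0 t0 : R) : Prop :=
  exists r, 0 < r /\ forall x t, 0 < t -> Rabs (x - x0) < r -> Rabs (t - t0) < r ->
    u x t - phi x t <= u x0 t0 - phi x0 t0.
Definition loc_min_at (u phi : R -> R -> R) (x0 t0 : R) : Prop :=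
  exists r, 0 < r /\ forall x t, 0 < t -> Rabs (x - x0) < r -> Rabs (t - t0) < r ->
    u x t - phi x t >= u x0 t0 - phi x0 t0.

Definition visc_sol_viscous (F : R -> R) (eps : R) (g0 : R -> R)
  (u : R -> R -> R) : Prop :=
  (forall x, u x 0 = g0 x) /\
  (forall x t e, 0 <= t -> 0 < e -> exists d, 0 < d /\
     forall y s, 0 <= s -> Rabs (y - x) < d -> Rabs (s - t) < d ->
       Rabs (u y s - u x t) < e) /\
  (forall phi phit phix phixx x0 t0, 0 < t0 -> C12_with phi phit phix phixx ->
     loc_max_at u phi x0 t0 ->
     phit x0 t0 + F (phix x0 t0) - eps * phixx x0 t0 <= 0) /\
  (forall phi phit phix phixx x0 t0, 0 < t0 -> C12_with phi phit phix phixx ->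
     loc_min_at u phi x0 t0 ->
     phit x0 t0 + F (phix x0 t0) - eps * phixx x0 t0 >= 0).

Definition visc_sol_HJ (F : R -> R) (g0 : R -> R) (u : R -> R -> R) : Prop :=
  (forall x, u x 0 = g0 x) /\
  (forall x t e, 0 <= t -> 0 < e -> exists d, 0 < d /\
     forall y s, 0 <= s -> Rabs (y - x) < d -> Rabs (s - t) < d ->
       Rabs (u y s - u x t) < e) /\
  (forall phi phit phix x0 t0, 0 < t0 -> C1_with phi phit phix ->
     loc_max_at u phi x0 t0 -> phit x0 t0 + F (phix x0 t0) <= 0) /\
  (forall phi phit phix x0 t0, 0 < t0 -> C1_with phi phit phix ->
     loc_min_at u phi x0 t0 -> phit x0 t0 + F (phix x0 t0) >= 0).

(* Main.v *)
From Stdlib Require Import Reals Lra Psatz IndefiniteDescription.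
From Coquelicot Require Import Coquelicot.
Require Import Defs.
Open Scope R_scope.

Lemma deriv_cont (f : R -> R) : (forall x, ex_derive f x) -> forall x, continuity_pt f x.
Proof.
  intros H x. apply derivable_continuous_pt. exists (Derive f x).
  apply is_derive_Reals. apply Derive_correct. apply H.
Qed.

Lemma mono_deriv (f df : R -> R) (a b : R) :
  a <= b -> (forall x, a <= x <= b -> is_derive f x (df x)) ->
  (forall x, a <= x <= b -> 0 <= df x) -> f a <= f b.
Proof.
  intros Hab Hd Hp.
  destruct (MVT_gen f a b df) as [c [Hc Heq]].
  - intros x Hx. apply Hd. rewrite Rmin_left in Hx by lra. rewrite Rmax_right in Hx by lra. lra.
  - intros x Hx. rewrite Rmin_left in Hx by lra. rewrite Rmax_right in Hx by lra.
    apply derivable_continuous_pt. exists (df x). apply is_derive_Reals. apply Hd; lra.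
  - rewrite Rmin_left in Hc by lra. rewrite Rmax_right in Hc by lra.
    assert (0 <= df c) by (apply Hp; lra). nra.
Qed.

Lemma lip_deriv (f df : R -> R) (a b L : R) :
  a <= b -> (forall x, a <= x <= b -> is_derive f x (df x)) ->
  (forall x, a <= x <= b -> Rabs (df x) <= L) -> Rabs (f b - f a) <= L * (b - a).
Proof.
  intros Hab Hd Hp.
  destruct (MVT_gen f a b df) as [c [Hc Heq]].
  - intros x Hx. apply Hd. rewrite Rmin_left in Hx by lra. rewrite Rmax_right in Hx by lra. lra.
  - intros x Hx. rewrite Rmin_left in Hx by lra. rewrite Rmax_right in Hx by lra.
    apply derivable_continuous_pt. exists (df x). apply is_derive_Reals. apply Hd; lra.
  - rewrite Rmin_left in Hc by lra. rewrite Rmax_right in Hc by lra.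
    rewrite Heq, Rabs_mult, (Rabs_right (b - a)) by lra.
    apply Rmult_le_compat_r; [lra|]. apply Hp; lra.
Qed.

Definition gau (r : R) := exp (-(r*r)).
Definition E (z : R) := RInt gau 0 z.

Lemma gau_cont : forall x, continuity_pt gau x.
Proof. apply deriv_cont. intros x. unfold gau. auto_derive. auto. Qed.

Lemma E_deriv : forall z, is_derive E z (gau z).
Proof.
  intros z. unfold E. auto_derive.
  - split; [|split; auto].
    + apply (@ex_RInt_continuous R_CompleteNormedModule). intros y _. apply continuity_pt_filterlim. apply gau_cont.
    + apply filter_forall. intros y. apply gau_cont.
  - ring.
Qed.
Lemma const_deriv (f : R -> R) a b : (forall x, is_derive f x 0) -> f a = f b.
Proof.
  intros H.
  assert (forall a b, a <= b -> f a <= f b) as M1.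
  { intros a0 b0 h. apply (mono_deriv f (fun _ => 0)); auto; intros; lra. }
  assert (forall a b, a <= b -> f b <= f a) as M2.
  { intros a0 b0 h. assert (- f a0 <= - f b0); [|lra].
    apply (mono_deriv (fun x => - f x) (fun _ => 0)); auto; try (intros; lra).
    intros x _. auto_derive. eexists; apply H.
    change (Derive (fun x0 => f x0) x) with (Derive f x). rewrite (is_derive_unique _ _ _ (H x)). ring. }
  destruct (Rle_dec a b); [specialize (M1 a b); specialize (M2 a b)|
    specialize (M1 b a); specialize (M2 b a)]; lra.
Qed.

Lemma exp_le a b : a <= b -> exp a <= exp b.
Proof. intros [h|h]; [left; apply exp_increasing; auto | subst; lra]. Qed.

Lemma gau_pos x : 0 < gau x.
Proof. unfold gau. apply exp_pos. Qed.
Lemma gau_le1 x : gau x <= 1.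
Proof. unfold gau. rewrite <- exp_0. apply exp_le. nra. Qed.
Lemma gau_even x : gau (- x) = gau x.
Proof. unfold gau. f_equal. ring. Qed.
Lemma gau_deriv x : is_derive gau x (- 2 * x * gau x).
Proof. unfold gau. auto_derive; auto. ring. Qed.

Lemma ex_E x : ex_derive E x.
Proof. eexists; apply E_deriv. Qed.
Lemma Derive_E x : Derive E x = gau x.
Proof. apply is_derive_unique, E_deriv. Qed.

Lemma Derive_E' x : Derive (fun y => E y) x = gau x.
Proof. apply is_derive_unique, E_deriv. Qed.
Ltac dE := auto_derive; [repeat split; try apply ex_E; auto | repeat (rewrite Derive_E || rewrite Derive_E')].

Lemma E0 : E 0 = 0.
Proof. unfold E. apply (@RInt_point R_CompleteNormedModule). Qed.

Lemma E_odd z : E (- z) = - E z.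
Proof.
  assert (E (-z) + E z = E (-0) + E 0); [|rewrite Ropp_0, E0 in H; lra].
  apply (const_deriv (fun x => E (-x) + E x)). intros x.
  dE. rewrite gau_even. ring.
Qed.

Lemma E_mono a b : a <= b -> E a <= E b.
Proof. intros h. apply (mono_deriv E gau); auto. intros; apply E_deriv.
  intros; left; apply gau_pos. Qed.

Lemma E_lip a b : a <= b -> E b - E a <= b - a.
Proof. intros h. assert (a - E a <= b - E b); [|lra].
  apply (mono_deriv (fun x => x - E x) (fun x => 1 - gau x)); auto.
  - intros x _. dE. ring.
  - intros x _. pose proof (gau_le1 x). lra.
Qed.

Lemma E_up_piece a b : 0 < a <= b -> E b - E a <= (gau a - gau b) / (2 * a).
Proof.
  intros [ha hab].
  assert ((gau a - gau a)/(2*a) - (E a - E a) <= (gau a - gau b)/(2*a) - (E b - E a)); [|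
    replace ((gau a - gau a)/(2*a) - (E a - E a)) with 0 in H by (field; lra); lra].
  apply (mono_deriv (fun x => (gau a - gau x)/(2*a) - (E x - E a))
     (fun x => gau x * (x / a - 1))); auto.
  - intros x _. unfold gau at 2 3. dE. unfold gau. field. lra.
  - intros x hx. pose proof (gau_pos x). apply Rmult_le_pos; [lra|].
    apply (Rmult_le_reg_r a); [lra|]. unfold Rdiv. rewrite Rmult_minus_distr_r, Rmult_assoc, Rinv_l by lra. lra.
Qed.

Lemma E_lo_piece a b : 0 < a <= b -> (gau a - gau b) / (2 * b) <= E b - E a.
Proof.
  intros [ha hab].
  assert ((E a - E a) - (gau a - gau a)/(2*b) <= (E b - E a) - (gau a - gau b)/(2*b)); [|
    replace ((E a - E a) - (gau a - gau a)/(2*b)) with 0 in H by (field; lra); lra].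
  apply (mono_deriv (fun x => (E x - E a) - (gau a - gau x)/(2*b))
     (fun x => gau x * (1 - x / b))); auto.
  - intros x _. unfold gau at 2 3. dE. unfold gau. field. lra.
  - intros x hx. pose proof (gau_pos x). apply Rmult_le_pos; [lra|].
    assert (x / b <= 1); [|lra]. apply (Rmult_le_reg_r b); [lra|]. unfold Rdiv.
    rewrite Rmult_assoc, Rinv_l by lra. lra.
Qed.

Lemma exp_neg_up y : 0 <= y -> exp (- y) <= 1 - y + y * y / 2.
Proof.
  intros hy. assert (1 - 0 + 0*0/2 - exp (-0) <= 1 - y + y*y/2 - exp (-y)); [|
    rewrite Ropp_0, exp_0 in H; lra].
  apply (mono_deriv (fun y => 1 - y + y*y/2 - exp (-y)) (fun y => y - 1 + exp (-y))); auto.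
  - intros x _. auto_derive; auto. field.
  - intros x _. pose proof (exp_ineq1_le (-x)). lra.
Qed.

Lemma E1_up : E 1 <= 1 - 1/3 + 1/10.
Proof.
  assert (0 - 0 + 0 - E 0 <= 1 - 1/3 + 1/10 - E 1); [|rewrite E0 in H; lra].
  replace (1 - 1/3 + 1/10 - E 1) with (1 - 1*1*1/3 + 1*1*1*1*1/10 - E 1) by field.
  replace (0 - 0 + 0 - E 0) with (0 - 0*0*0/3 + 0*0*0*0*0/10 - E 0) by field.
  apply (mono_deriv (fun x => x - x*x*x/3 + x*x*x*x*x/10 - E x)
    (fun x => 1 - x*x + x*x*x*x/2 - gau x)); [lra| |].
  - intros x _. dE. field.
  - intros x _. unfold gau. pose proof (exp_neg_up (x*x)). assert (0 <= x*x) by nra.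
    specialize (H H0). nra.
Qed.

Lemma E1_lo : 2/3 <= E 1.
Proof.
  assert (E 0 - 0 + 0 <= E 1 - 1 + 1*1*1/3); [|rewrite E0 in H; lra].
  replace (E 0 - 0 + 0) with (E 0 - 0 + 0*0*0/3) by field.
  apply (mono_deriv (fun x => E x - x + x*x*x/3) (fun x => gau x - 1 + x*x)); [lra| |].
  - intros x _. dE. field.
  - intros x _. unfold gau. pose proof (exp_ineq1_le (-(x*x))). lra.
Qed.

Lemma E_le_32 z : E z <= 3/2.
Proof.
  destruct (Rle_dec z 1).
  - pose proof (E_mono z 1 r). pose proof E1_up. lra.
  - pose proof (E_up_piece 1 z ltac:(lra)). pose proof (gau_pos z).
    pose proof (gau_le1 1). pose proof E1_up. lra.
Qed.

Definition Eset (y : R) : Prop := exists z, y = E z.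
Lemma Eset_bound : bound Eset.
Proof. exists (3/2). intros y [z ->]. apply E_le_32. Qed.
Lemma Eset_ne : exists y, Eset y.
Proof. exists (E 0). exists 0. auto. Qed.

Definition Es : R := proj1_sig (completeness Eset Eset_bound Eset_ne).

Lemma Es_lub : is_lub Eset Es.
Proof. unfold Es. destruct (completeness Eset Eset_bound Eset_ne). auto. Qed.

Lemma E_le_Es z : E z <= Es.
Proof. destruct Es_lub as [H _]. apply H. exists z; auto. Qed.

Lemma Es_le M : (forall z, E z <= M) -> Es <= M.
Proof. intros H. destruct Es_lub as [_ H2]. apply H2. intros y [z ->]. auto. Qed.

Lemma Es_tail a : 0 < a -> Es <= E a + gau a / (2 * a).
Proof.
  intros ha. apply Es_le. intros z. destruct (Rle_dec z a).
  - pose proof (E_mono z a r). assert (0 <= gau a / (2*a)).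
    { apply Rmult_le_pos. left; apply gau_pos. left; apply Rinv_0_lt_compat; lra. } lra.
  - pose proof (E_up_piece a z ltac:(lra)). pose proof (gau_pos z).
    assert ((gau a - gau z) / (2*a) <= gau a / (2*a)); [|lra].
    unfold Rdiv. apply Rmult_le_compat_r. left; apply Rinv_0_lt_compat; lra. lra.
Qed.

Lemma Es_lo : 2/3 <= Es.
Proof. pose proof (E_le_Es 1). pose proof E1_lo. lra. Qed.

Definition cc : R := / (2 * Es).
Definition Nf (z : R) : R := 1/2 + cc * E z.

Lemma cc_pos : 0 < cc.
Proof. unfold cc. pose proof Es_lo. apply Rinv_0_lt_compat. lra. Qed.
Lemma cc_le : cc <= 3/4.
Proof. unfold cc. pose proof Es_lo. apply (Rmult_le_reg_l (2*Es)); [lra|].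
  rewrite Rinv_r by lra. lra. Qed.
Lemma cc_Es : cc * Es = 1/2.
Proof. unfold cc. pose proof Es_lo. field. lra. Qed.

Lemma E_abs z : - Es <= E z <= Es.
Proof. split; [|apply E_le_Es]. pose proof (E_le_Es (-z)). rewrite E_odd in H. lra. Qed.

Lemma Nf_range z : 0 <= Nf z <= 1.
Proof. unfold Nf. pose proof (E_abs z). pose proof cc_pos. pose proof cc_Es.
  split; nra. Qed.

Lemma Nf_sym z : Nf z + Nf (- z) = 1.
Proof. unfold Nf. rewrite E_odd. field. Qed.

Lemma Nf_deriv z : is_derive Nf z (cc * gau z).
Proof. unfold Nf. dE. ring. Qed.

Lemma ex_Nf z : ex_derive Nf z.
Proof. eexists; apply Nf_deriv. Qed.
Lemma Derive_Nf z : Derive Nf z = cc * gau z.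
Proof. apply is_derive_unique, Nf_deriv. Qed.
Lemma Derive_Nf' z : Derive (fun y => Nf y) z = cc * gau z.
Proof. apply is_derive_unique, Nf_deriv. Qed.

Lemma Nf_mono a b : a <= b -> Nf a <= Nf b.
Proof. intros h. unfold Nf. pose proof (E_mono a b h). pose proof cc_pos. nra. Qed.

Lemma Mills z : 0 <= z -> 2 * z * Nf (- z) <= cc * gau z.
Proof.
  intros [hz|hz].
  - pose proof (Es_tail z hz). unfold Nf. rewrite E_odd.
    replace (1/2) with (cc * Es) by apply cc_Es.
    pose proof cc_pos.
    assert (2 * z * (Es - E z) <= gau z).
    { assert (Es - E z <= gau z / (2 * z)) by lra.
      apply (Rmult_le_compat_l (2*z)) in H1; [|lra].
      replace (2 * z * (gau z / (2 * z))) with (gau z) in H1 by (field; lra). lra. }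
    nra.
  - subst. pose proof cc_pos. pose proof (gau_pos 0). nra.
Qed.

Lemma Der_eta (f : R -> R) x l : is_derive f x l -> Derive (fun y : R => f y) x = l.
Proof. intros H. apply is_derive_unique. auto. Qed.

Definition Wf (y th : R) : R := y * Nf (y / (2 * sqrt th)) + sqrt th * cc * gau (y / (2 * sqrt th)).
Definition Wy (y th : R) : R := Nf (y / (2 * sqrt th)).
Definition Wyy (y th : R) : R := cc * gau (y / (2 * sqrt th)) / (2 * sqrt th).

Lemma W_chain (a b : R -> R) (da db t : R) :
  is_derive a t da -> is_derive b t db -> 0 < b t ->
  is_derive (fun t => Wf (a t) (b t)) t (da * Wy (a t) (b t) + db * Wyy (a t) (b t)).
Proof.
  intros Ha Hb Hpos. unfold Wf, Wy, Wyy, gau.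
  assert (0 < sqrt (b t)) by (apply sqrt_lt_R0; auto).
  auto_derive; [repeat split; try (eexists; eassumption); try apply ex_Nf; try lra; auto| lra ..|].
  rewrite (Der_eta a t da Ha), (Der_eta b t db Hb).
  rewrite ?Derive_Nf, ?Derive_Nf'. unfold gau.
  unfold Rdiv. set (Z := exp _). set (Y := Nf _). set (S := sqrt (b t)).
  field. unfold S; intro; lra.
Qed.

Lemma Wy_chain (a : R -> R) (th da t : R) :
  is_derive a t da -> 0 < th ->
  is_derive (fun t => Wy (a t) th) t (da * Wyy (a t) th).
Proof.
  intros Ha Hpos. unfold Wy, Wyy.
  assert (0 < sqrt th) by (apply sqrt_lt_R0; auto).
  auto_derive; [repeat split; try (eexists; eassumption); try apply ex_Nf; try lra; auto| lra ..|].
  rewrite (Der_eta a t da Ha).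
  rewrite ?Derive_Nf, ?Derive_Nf'. unfold gau.
  unfold Rdiv. set (Z := exp _). set (S := sqrt th).
  field. unfold S; intro; lra.
Qed.

Lemma Wy_range y th : 0 <= Wy y th <= 1.
Proof. apply Nf_range. Qed.

Lemma Wy_mono a b th : 0 < th -> a <= b -> Wy a th <= Wy b th.
Proof. intros h hab. unfold Wy. apply Nf_mono.
  assert (0 < sqrt th) by (apply sqrt_lt_R0; auto).
  unfold Rdiv. apply Rmult_le_compat_r; [|auto]. left; apply Rinv_0_lt_compat; lra. Qed.

Lemma Wyy_range y th : 0 < th -> 0 <= Wyy y th <= cc / (2 * sqrt th).
Proof. intros h. unfold Wyy.
  assert (0 < sqrt th) by (apply sqrt_lt_R0; auto).
  pose proof (gau_pos (y / (2 * sqrt th))). pose proof (gau_le1 (y / (2 * sqrt th))).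
  pose proof cc_pos.
  unfold Rdiv. split.
  - apply Rmult_le_pos; [nra|]. left; apply Rinv_0_lt_compat; lra.
  - apply Rmult_le_compat_r. left; apply Rinv_0_lt_compat; lra. nra.
Qed.

Lemma W_lower y th : 0 < th -> Rmax y 0 <= Wf y th.
Proof.
  intros h. assert (hs : 0 < sqrt th) by (apply sqrt_lt_R0; auto).
  unfold Wf. set (s := sqrt th) in *. set (z := y / (2 * s)).
  assert (hy : y = 2 * s * z) by (unfold z; field; lra).
  pose proof cc_pos.
  unfold Rmax. destruct (Rle_dec y 0).
  - assert (hz : z <= 0) by (unfold z; unfold Rdiv; apply Rmult_le_0_r; [lra|left; apply Rinv_0_lt_compat; lra]).
    pose proof (Mills (- z) ltac:(lra)). rewrite Ropp_involutive, gau_even in H0.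
    clearbody z s. subst y. nra.
  - assert (hz : 0 <= z) by (unfold z; unfold Rdiv; apply Rmult_le_pos; [lra|left; apply Rinv_0_lt_compat; lra]).
    pose proof (Mills z hz). pose proof (Nf_sym z).
    clearbody z s. subst y. nra.
Qed.

Lemma W_upper y th : 0 < th -> Wf y th <= Rmax y 0 + sqrt th * cc.
Proof.
  intros h. assert (hs : 0 < sqrt th) by (apply sqrt_lt_R0; auto).
  unfold Wf. set (s := sqrt th) in *. set (z := y / (2 * s)).
  pose proof cc_pos. pose proof (Nf_range z). pose proof (gau_pos z). pose proof (gau_le1 z).
  clearbody z s. assert (0 < s * cc) by nra. assert (s * cc * gau z <= s * cc) by nra.
  unfold Rmax. destruct (Rle_dec y 0); nra.
Qed.

Lemma W_sym y th : 0 < th -> Wf y th - Wf (- y) th = y.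
Proof.
  intros h. unfold Wf. replace (- y / (2 * sqrt th)) with (- (y / (2 * sqrt th))) by (unfold Rdiv; ring).
  rewrite gau_even. pose proof (Nf_sym (y / (2 * sqrt th))). nra.
Qed.

Lemma is_derive_val (f : R -> R) (x l l' : R) : is_derive f x l -> l = l' -> is_derive f x l'.
Proof. intros H ->. auto. Qed.

Lemma W_deriv_y y th : 0 < th -> is_derive (fun y => Wf y th) y (Wy y th).
Proof.
  intros h. eapply is_derive_val.
  - apply (W_chain (fun y => y) (fun _ => th) 1 0 y); auto. auto_derive; auto. auto_derive; auto.
  - ring.
Qed.

Lemma W_mono_lip a b th : 0 < th -> a <= b -> 0 <= Wf b th - Wf a th <= b - a.
Proof.
  intros h hab. split.
  - assert (Wf a th <= Wf b th); [|lra].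
    apply (mono_deriv (fun y => Wf y th) (fun y => Wy y th)); auto.
    + intros; apply W_deriv_y; auto.
    + intros; apply Wy_range.
  - assert (a - Wf a th <= b - Wf b th); [|lra].
    apply (mono_deriv (fun y => y - Wf y th) (fun y => 1 - Wy y th)); auto.
    + intros. apply (is_derive_minus (fun y => y) (fun y => Wf y th)). auto_derive; auto. apply W_deriv_y; auto.
    + intros. pose proof (Wy_range x th). lra.
Qed.

Definition vf (s th : R) : R := Wf s th - 2 * Wf (s - 2) th + Wf (s - 4) th.
Definition vs (s th : R) : R := Wy s th - 2 * Wy (s - 2) th + Wy (s - 4) th.
Definition vss (s th : R) : R := Wyy s th - 2 * Wyy (s - 2) th + Wyy (s - 4) th.
Definition Tp (s : R) : R := Rmax 0 (Rmin s (4 - s)).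

Lemma vs_range s th : 0 < th -> -1 <= vs s th <= 1.
Proof.
  intros h. unfold vs.
  pose proof (Wy_mono (s-2) s th h ltac:(lra)). pose proof (Wy_mono (s-4) (s-2) th h ltac:(lra)).
  pose proof (Wy_range s th). pose proof (Wy_range (s-2) th). pose proof (Wy_range (s-4) th).
  lra.
Qed.

Lemma vss_abs s th : 0 < th -> Rabs (vss s th) <= 2 * cc / sqrt th.
Proof.
  intros h. unfold vss.
  pose proof (Wyy_range s th h). pose proof (Wyy_range (s-2) th h). pose proof (Wyy_range (s-4) th h).
  assert (0 < sqrt th) by (apply sqrt_lt_R0; auto).
  replace (2 * cc / sqrt th) with (4 * (cc / (2 * sqrt th))) by (field; lra).
  apply Rabs_le. lra.
Qed.

Lemma vf_le2 s th : 0 < th -> vf s th <= 2.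
Proof.
  intros h. unfold vf.
  pose proof (W_mono_lip (s-2) s th h ltac:(lra)). pose proof (W_mono_lip (s-4) (s-2) th h ltac:(lra)).
  lra.
Qed.

Lemma vf_sym s th : 0 < th -> vf (4 - s) th = vf s th.
Proof.
  intros h. unfold vf.
  pose proof (W_sym (4 - s) th h). pose proof (W_sym (2 - s) th h). pose proof (W_sym s th h).
  replace (4 - s - 2) with (2 - s) by ring. replace (4 - s - 4) with (- s) by ring.
  replace (- (4 - s)) with (s - 4) in H by ring. replace (- (2 - s)) with (s - 2) in H0 by ring.
  lra.
Qed.

Lemma vf_init s th : 0 < th -> vf s th <= Tp s + sqrt th * cc.
Proof.
  intros h.
  assert (forall s, s <= 2 -> vf s th <= Tp s + sqrt th * cc) as Hle.
  { intros s0 hs0. unfold vf.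
    pose proof (W_mono_lip (s0-4) (s0-2) th h ltac:(lra)).
    pose proof (W_upper s0 th h). pose proof (W_lower (s0 - 2) th h).
    unfold Tp, Rmax, Rmin in *.
    destruct (Rle_dec s0 0); destruct (Rle_dec (s0-2) 0); destruct (Rle_dec s0 (4 - s0));
      destruct (Rle_dec 0 s0); destruct (Rle_dec 0 (4 - s0)); lra. }
  destruct (Rle_dec s 2).
  - auto.
  - rewrite <- vf_sym by auto. replace (Tp s) with (Tp (4 - s)).
    + apply Hle. lra.
    + unfold Tp. replace (4 - (4 - s)) with s by ring. rewrite Rmin_comm. auto.
Qed.

Lemma exp_neg_lo y : 0 <= y -> 1 - y + y * y / 2 - y * y * y / 6 <= exp (- y).
Proof.
  intros hy. assert (exp (-0) - (1 - 0 + 0*0/2 - 0*0*0/6) <= exp (-y) - (1 - y + y*y/2 - y*y*y/6)); [|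
    rewrite Ropp_0, exp_0 in H; lra].
  apply (mono_deriv (fun y => exp (-y) - (1 - y + y*y/2 - y*y*y/6))
     (fun y => 1 - y + y*y/2 - exp (-y))); auto.
  - intros x _. auto_derive; auto. field.
  - intros x hx. pose proof (exp_neg_up x ltac:(lra)). lra.
Qed.

Definition P : R := exp (- (1/2)).

Lemma sq_bounds l u x : 0 <= l -> l <= x <= u -> l * l <= x * x <= u * u.
Proof. intros h [h1 h2]. split; nra. Qed.

Lemma exp_dbl a : exp (- a) * exp (- a) = exp (- (2 * a)).
Proof. rewrite <- exp_plus. f_equal. ring. Qed.

Lemma P_bounds : 0.60649 <= P <= 0.60677.
Proof.
  pose proof (exp_neg_lo (1/16) ltac:(lra)) as L0.
  pose proof (exp_neg_up (1/16) ltac:(lra)) as U0.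
  assert (B1 : 0.88249 <= exp (- (2 * (1/16))) <= 0.88258).
  { rewrite <- exp_dbl. pose proof (sq_bounds (1 - 1/16 + 1/16*(1/16)/2 - 1/16*(1/16)*(1/16)/6)
      (1 - 1/16 + 1/16*(1/16)/2) (exp (-(1/16))) ltac:(lra) ltac:(lra)). lra. }
  assert (B2 : 0.77878 <= exp (- (2 * (2 * (1/16)))) <= 0.77895).
  { rewrite <- exp_dbl. pose proof (sq_bounds 0.88249 0.88258 _ ltac:(lra) B1). lra. }
  assert (B3 : 0.60649 <= exp (- (2 * (2 * (2 * (1/16))))) <= 0.60677).
  { rewrite <- exp_dbl. pose proof (sq_bounds 0.77878 0.77895 _ ltac:(lra) B2). lra. }
  unfold P. replace (1/2) with (2 * (2 * (2 * (1/16)))) by field. exact B3.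
Qed.

Lemma P_pow n : exp (- (INR n / 2)) = P ^ n.
Proof.
  induction n.
  - simpl. replace (- (0/2)) with 0 by field. apply exp_0.
  - rewrite S_INR. replace (- ((INR n + 1) / 2)) with (- (INR n / 2) + - (1/2)) by field.
    rewrite exp_plus, IHn. unfold P. simpl. ring.
Qed.

Lemma sqrt_bounds a l u : 0 <= l -> l * l <= a <= u * u -> 0 <= u -> l <= sqrt a <= u.
Proof.
  intros hl [h1 h2] hu. split.
  - rewrite <- (sqrt_square l) by auto. apply sqrt_le_1_alt. auto.
  - rewrite <- (sqrt_square u) by auto. apply sqrt_le_1_alt. auto.
Qed.

Lemma gau_sqrt a : 0 <= a -> gau (sqrt a) = exp (- a).
Proof. intros h. unfold gau. rewrite sqrt_sqrt by auto. auto. Qed.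

Lemma vf01 : vf 0 1 = cc * (1 - 2 * gau 1 + gau 2) + 4 * cc * (E 2 - E 1).
Proof.
  unfold vf, Wf. rewrite sqrt_1.
  replace ((0 - 2) / (2 * 1)) with (Ropp 1) by field.
  replace ((0 - 4) / (2 * 1)) with (Ropp 2) by field.
  replace (0 / (2 * 1)) with 0 by field.
  rewrite !gau_even. unfold Nf. rewrite !E_odd.
  assert (gau 0 = 1) by (unfold gau; replace (-(0*0)) with 0 by ring; apply exp_0).
  rewrite H. field.
Qed.

Lemma vf01_bound : (exp 1 - 1) / (sqrt PI * exp 1) + 1/32 <= vf 0 1.
Proof.
  pose proof P_bounds as HP.
  assert (HPk : forall k, 0.60649 ^ k <= P ^ k <= 0.60677 ^ k).
  { intros k. split; apply pow_incr; lra. }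
  assert (G1 : gau 1 = P ^ 2).
  { rewrite <- P_pow. unfold gau. f_equal. simpl. lra. }
  assert (G15 : gau (sqrt 1.5) = P ^ 3).
  { rewrite gau_sqrt by lra. rewrite <- P_pow. f_equal. simpl. lra. }
  assert (G2 : gau (sqrt 2) = P ^ 4).
  { rewrite gau_sqrt by lra. rewrite <- P_pow. f_equal. simpl. lra. }
  assert (G3 : gau (sqrt 3) = P ^ 6).
  { rewrite gau_sqrt by lra. rewrite <- P_pow. f_equal. simpl. lra. }
  assert (G4 : gau 2 = P ^ 8).
  { rewrite <- P_pow. unfold gau. f_equal. simpl. lra. }
  assert (S15 : 1.2247 <= sqrt 1.5 <= 1.2248) by (apply sqrt_bounds; lra).
  assert (S2 : 1.4142 <= sqrt 2 <= 1.4143) by (apply sqrt_bounds; lra).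
  assert (S3 : 1.7320 <= sqrt 3 <= 1.7321) by (apply sqrt_bounds; lra).
  assert (A2 : 0.36783 <= P ^ 2 <= 0.36817) by (destruct (HPk 2%nat); simpl in *; split; lra).
  assert (A3 : 0.223085 <= P ^ 3 <= 0.223395) by (destruct (HPk 3%nat); simpl in *; split; lra).
  assert (A4 : 0.135298 <= P ^ 4 <= 0.13555) by (destruct (HPk 4%nat); simpl in *; split; lra).
  assert (A6 : 0.049767 <= P ^ 6 <= 0.049906) by (destruct (HPk 6%nat); simpl in *; split; lra).
  assert (A8 : 0.018305 <= P ^ 8 <= 0.018374) by (destruct (HPk 8%nat); simpl in *; split; lra).
  clear HPk HP.

  assert (div_lb : forall a A s S, 0 <= a -> a <= A -> 0 < s -> s <= S -> a / S <= A / s).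
  { intros a A s0 S0 h1 h2 h3 h4. unfold Rdiv. apply Rmult_le_compat; auto.
    left; apply Rinv_0_lt_compat; lra. apply Rinv_le_contravar; lra. }
  assert (div_ub : forall a A s S, 0 <= A -> A <= a -> 0 < s -> s <= S -> A / S <= a / s).
  { intros a A s0 S0 h1 h2 h3 h4. unfold Rdiv. apply Rmult_le_compat; auto.
    left; apply Rinv_0_lt_compat; lra. apply Rinv_le_contravar; lra. }
  pose proof (E_lo_piece 1 (sqrt 1.5) ltac:(lra)) as L1.
  pose proof (E_lo_piece (sqrt 1.5) (sqrt 2) ltac:(lra)) as L2.
  pose proof (E_lo_piece (sqrt 2) (sqrt 3) ltac:(lra)) as L3.
  pose proof (E_lo_piece (sqrt 3) 2 ltac:(lra)) as L4.
  rewrite G1, G15 in L1. rewrite G15, G2 in L2. rewrite G2, G3 in L3. rewrite G3, G4 in L4.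
  assert (0.05896 <= (P^2 - P^3) / (2 * sqrt 1.5)).
  { apply Rle_trans with ((0.36783 - 0.223395)/(2*1.2248)); [lra|apply div_lb; lra]. }
  assert (0.03094 <= (P^3 - P^4) / (2 * sqrt 2)).
  { apply Rle_trans with ((0.223085 - 0.13555)/(2*1.4143)); [lra|apply div_lb; lra]. }
  assert (0.02464 <= (P^4 - P^6) / (2 * sqrt 3)).
  { apply Rle_trans with ((0.135298 - 0.049906)/(2*1.7321)); [lra|apply div_lb; lra]. }
  assert (0.00784 <= (P^6 - P^8) / (2 * 2)).
  { apply Rle_trans with ((0.049767 - 0.018374)/(2*2)); [lra|apply div_lb; lra]. }
  assert (J : 0.12238 <= E 2 - E 1) by lra.
  pose proof (Es_tail 2 ltac:(lra)) as T.
  pose proof (E_up_piece 1 (sqrt 2) ltac:(lra)) as U1.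
  pose proof (E_up_piece (sqrt 2) 2 ltac:(lra)) as U2.
  pose proof E1_up as U0.
  rewrite G1, G2 in U1. rewrite G2, G4 in U2. rewrite G4 in T.
  assert ((P^2 - P^4) / (2 * 1) <= 0.116436).
  { apply Rle_trans with ((0.36817 - 0.135298)/(2*1)); [apply div_ub; lra|lra]. }
  assert ((P^4 - P^8) / (2 * sqrt 2) <= 0.04146).
  { apply Rle_trans with ((0.13555 - 0.018305)/(2*1.4142)); [apply div_ub; lra|lra]. }
  assert (P^8 / (2 * 2) <= 0.004594).
  { apply Rle_trans with (0.018374/(2*2)); [apply div_ub; lra|lra]. }
  assert (Esu : Es <= 0.92916) by lra.
  pose proof Es_lo.
  assert (ccl : / (2 * 0.92916) <= cc).
  { unfold cc. apply Rinv_le_contravar; lra. }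
  rewrite vf01, G1, G4.
  assert (ST : 0.75318 <= 1 - 2 * P^2 + P^8 + 4 * (E 2 - E 1)) by lra.
  assert (K : (exp 1 - 1) / (sqrt PI * exp 1) = (1 - P^2) / sqrt PI).
  { rewrite <- G1. unfold gau. replace (- (1*1)) with (Ropp 1) by ring. rewrite exp_Ropp.
    assert (0 < exp 1) by apply exp_pos.
    assert (0 < sqrt PI) by (apply sqrt_lt_R0; apply PI_RGT_0).
    field. split; lra. }
  rewrite K.
  assert (SP : 1.732 <= sqrt PI).
  { pose proof PI2_3_2. apply Rle_trans with (sqrt 3); [lra|]. apply sqrt_le_1_alt. lra. }
  assert ((1 - P^2) / sqrt PI <= 0.365).
  { apply Rle_trans with ((1 - 0.36783)/1.732); [apply div_ub; lra|lra]. }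
  assert (0.4053 <= cc * (1 - 2 * P^2 + P^8) + 4 * cc * (E 2 - E 1)).
  { replace (cc * (1 - 2 * P^2 + P^8) + 4 * cc * (E 2 - E 1)) with
      (cc * (1 - 2 * P^2 + P^8 + 4 * (E 2 - E 1))) by ring.
    assert (0.4053 <= / (2 * 0.92916) * 0.75318).
    { apply (Rmult_le_reg_l (2 * 0.92916)); [lra|]. rewrite <- Rmult_assoc, Rinv_r by lra. lra. }
    assert (0 < / (2 * 0.92916)) by (apply Rinv_0_lt_compat; lra).
    nra. }
  lra.
Qed.

Lemma cont_pt_intro (f : R -> R) x0 :
  (forall e, 0 < e -> exists d, 0 < d /\ forall x, Rabs (x - x0) < d -> Rabs (f x - f x0) < e) ->
  continuity_pt f x0.
Proof.
  intros H e he. destruct (H e he) as [d [hd Hd]]. exists d. split; auto.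
  intros x [_ hx]. apply Hd. auto.
Qed.

Lemma cont_pt_elim (f : R -> R) x0 : continuity_pt f x0 ->
  forall e, 0 < e -> exists d, 0 < d /\ forall x, Rabs (x - x0) < d -> Rabs (f x - f x0) < e.
Proof.
  intros H e he. destruct (H e he) as [d [hd Hd]]. exists d. split; auto.
  intros x hx. destruct (Req_dec x x0) as [->|hne].
  - rewrite Rminus_diag, Rabs_R0. auto.
  - apply (Hd x). split; [split; [constructor|auto]|auto].
Qed.

Lemma lt_min_l a b c : a < Rmin b c -> a < b.
Proof. intros h. eapply Rlt_le_trans; eauto. apply Rmin_l. Qed.
Lemma lt_min_r a b c : a < Rmin b c -> a < c.
Proof. intros h. eapply Rlt_le_trans; eauto. apply Rmin_r. Qed.

Lemma c2_const c : continuous2 (fun _ _ => c).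
Proof. intros x t e he. exists 1. split; [lra|]. intros. rewrite Rminus_diag, Rabs_R0. auto. Qed.
Lemma c2_fst : continuous2 (fun x _ => x).
Proof. intros x t e he. exists e. split; auto. Qed.
Lemma c2_snd : continuous2 (fun _ t => t).
Proof. intros x t e he. exists e. split; auto. Qed.
Lemma c2_plus f g : continuous2 f -> continuous2 g -> continuous2 (fun x t => f x t + g x t).
Proof.
  intros Hf Hg x t e he.
  destruct (Hf x t (e/2) ltac:(lra)) as [d1 [h1 H1]]. destruct (Hg x t (e/2) ltac:(lra)) as [d2 [h2 H2]].
  exists (Rmin d1 d2). split; [apply Rmin_pos; auto|]. intros y s hy hs.
  assert (Rabs (y - x) < d1 /\ Rabs (y - x) < d2) as [a1 a2] by (split; [eapply lt_min_l|eapply lt_min_r]; eauto).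
  assert (Rabs (s - t) < d1 /\ Rabs (s - t) < d2) as [b1 b2] by (split; [eapply lt_min_l|eapply lt_min_r]; eauto).
  specialize (H1 y s a1 b1). specialize (H2 y s a2 b2).
  replace (f y s + g y s - (f x t + g x t)) with ((f y s - f x t) + (g y s - g x t)) by ring.
  eapply Rle_lt_trans; [apply Rabs_triang|]. lra.
Qed.
Lemma c2_comp (f : R -> R) A : (forall z, continuity_pt f z) -> continuous2 A ->
  continuous2 (fun x t => f (A x t)).
Proof.
  intros Hf HA x t e he.
  destruct (cont_pt_elim f (A x t) (Hf _) e he) as [d1 [h1 H1]].
  destruct (HA x t d1 h1) as [d2 [h2 H2]].
  exists d2. split; [auto|]. intros y s hy hs. apply H1. apply H2; auto.
Qed.
Lemma c2_mult f g : continuous2 f -> continuous2 g -> continuous2 (fun x t => f x t * g x t).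
Proof.
  intros Hf Hg x t e he.
  set (M := Rabs (f x t) + Rabs (g x t) + 1).
  assert (hM : 1 <= M) by (unfold M; pose proof (Rabs_pos (f x t)); pose proof (Rabs_pos (g x t)); lra).
  set (e1 := Rmin 1 (e / (3 * M))).
  assert (he1 : 0 < e1) by (unfold e1; apply Rmin_pos; [lra|]; apply Rdiv_lt_0_compat; lra).
  destruct (Hf x t e1 he1) as [d1 [h1 H1]]. destruct (Hg x t e1 he1) as [d2 [h2 H2]].
  exists (Rmin d1 d2). split; [apply Rmin_pos; auto|]. intros y s hy hs.
  assert (Rabs (y - x) < d1 /\ Rabs (y - x) < d2) as [a1 a2] by (split; [eapply lt_min_l|eapply lt_min_r]; eauto).
  assert (Rabs (s - t) < d1 /\ Rabs (s - t) < d2) as [b1 b2] by (split; [eapply lt_min_l|eapply lt_min_r]; eauto).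
  specialize (H1 y s a1 b1). specialize (H2 y s a2 b2).
  assert (e1 <= 1) by apply Rmin_l. assert (e1 <= e / (3 * M)) by apply Rmin_r.
  assert (e1 * M <= e / 3).
  { apply Rle_trans with (e / (3 * M) * M). apply Rmult_le_compat_r; lra.
    right. field. lra. }
  replace (f y s * g y s - f x t * g x t) with
    ((f y s - f x t) * (g y s - g x t) + (f y s - f x t) * g x t + f x t * (g y s - g x t)) by ring.
  eapply Rle_lt_trans; [apply Rabs_triang|].
  eapply Rle_lt_trans; [apply Rplus_le_compat_r; apply Rabs_triang|].
  rewrite !Rabs_mult.
  pose proof (Rabs_pos (f y s - f x t)). pose proof (Rabs_pos (g y s - g x t)).
  pose proof (Rabs_pos (f x t)). pose proof (Rabs_pos (g x t)).
  assert (Rabs (f y s - f x t) * Rabs (g y s - g x t) <= e1 * e1) by (apply Rmult_le_compat; lra).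
  assert (Rabs (f y s - f x t) * Rabs (g x t) <= e1 * Rabs (g x t)) by (apply Rmult_le_compat_r; lra).
  assert (Rabs (f x t) * Rabs (g y s - g x t) <= Rabs (f x t) * e1) by (apply Rmult_le_compat_l; lra).
  assert (e1 * e1 <= e1) by nra.
  unfold M in *. nra.
Qed.

Lemma cont_everywhere (f : R -> R) : (forall x, ex_derive f x) -> forall z, continuity_pt f z.
Proof. apply deriv_cont. Qed.

Definition UC (f : R -> R -> R) : Prop :=
  forall e, 0 < e -> exists d, 0 < d /\
    forall x t y s, 0 <= t -> 0 <= s -> Rabs (y - x) < d -> Rabs (s - t) < d ->
      Rabs (f y s - f x t) < e.

Lemma UC_minus f g : UC f -> UC g -> UC (fun x t => f x t - g x t).
Proof.
  intros Hf Hg e he.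
  destruct (Hf (e/2) ltac:(lra)) as [d1 [h1 H1]]. destruct (Hg (e/2) ltac:(lra)) as [d2 [h2 H2]].
  exists (Rmin d1 d2). split; [apply Rmin_pos; auto|]. intros x t y s ht hs hy hst.
  assert (Rabs (y - x) < d1 /\ Rabs (y - x) < d2) as [a1 a2] by (split; [eapply lt_min_l|eapply lt_min_r]; eauto).
  assert (Rabs (s - t) < d1 /\ Rabs (s - t) < d2) as [b1 b2] by (split; [eapply lt_min_l|eapply lt_min_r]; eauto).
  specialize (H1 x t y s ht hs a1 b1). specialize (H2 x t y s ht hs a2 b2).
  replace (f y s - g y s - (f x t - g x t)) with ((f y s - f x t) - (g y s - g x t)) by ring.
  eapply Rle_lt_trans; [apply Rabs_triang|]. rewrite Rabs_Ropp. lra.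
Qed.

Lemma UC_BUC u : BUC_half u -> UC u.
Proof. intros [_ H]. exact H. Qed.

Lemma lip_abs (f df : R -> R) a b L :
  (forall x, is_derive f x (df x)) -> (forall x, Rmin a b <= x <= Rmax a b -> Rabs (df x) <= L) ->
  Rabs (f b - f a) <= L * Rabs (b - a).
Proof.
  intros Hd Hb. destruct (Rle_dec a b).
  - rewrite (Rabs_right (b - a)) by lra. apply (lip_deriv f df); auto.
    intros x hx. apply Hb. rewrite Rmin_left, Rmax_right; lra.
  - rewrite (Rabs_left (b - a)) by lra. rewrite <- Rabs_Ropp. replace (- (f b - f a)) with (f a - f b) by ring.
    replace (- (b - a)) with (a - b) by ring. apply (lip_deriv f df); auto. lra.
    intros x hx. apply Hb. rewrite Rmin_right, Rmax_left; lra.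
Qed.

Lemma UC_lip (f fx ft : R -> R -> R) Lx Lt :
  0 < Lx -> 0 < Lt ->
  (forall x t, is_derive (fun y => f y t) x (fx x t)) ->
  (forall x t, is_derive (fun s => f x s) t (ft x t)) ->
  (forall x t, 0 <= t -> Rabs (fx x t) <= Lx) ->
  (forall x t, 0 <= t -> Rabs (ft x t) <= Lt) -> UC f.
Proof.
  intros hLx hLt Hx Ht Bx Bt e he.
  exists (Rmin (e / (2 * Lx)) (e / (2 * Lt))). split.
  { apply Rmin_pos; apply Rdiv_lt_0_compat; lra. }
  intros x t y s ht hs hy hst.
  assert (Rabs (y - x) < e / (2*Lx)) by (eapply Rlt_le_trans; eauto; apply Rmin_l).
  assert (Rabs (s - t) < e / (2*Lt)) by (eapply Rlt_le_trans; eauto; apply Rmin_r).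
  assert (A1 : Rabs (f y s - f x s) <= Lx * Rabs (y - x)).
  { apply (lip_abs (fun y => f y s) (fun y => fx y s)); auto. }
  assert (A2 : Rabs (f x s - f x t) <= Lt * Rabs (s - t)).
  { apply (lip_abs (fun s => f x s) (fun s => ft x s)); auto.
    intros z hz. apply Bt. assert (0 <= Rmin t s) by (apply Rmin_glb; auto). lra. }
  replace (f y s - f x t) with ((f y s - f x s) + (f x s - f x t)) by ring.
  eapply Rle_lt_trans; [apply Rabs_triang|].
  assert (Lx * Rabs (y - x) < e / 2).
  { apply Rlt_le_trans with (Lx * (e / (2*Lx))). apply Rmult_lt_compat_l; auto. right; field; lra. }
  assert (Lt * Rabs (s - t) < e / 2).
  { apply Rlt_le_trans with (Lt * (e / (2*Lt))). apply Rmult_lt_compat_l; auto. right; field; lra. }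
  lra.
Qed.

Definition clamp (Tm t : R) : R := Rmax 0 (Rmin Tm t).

Lemma clamp_range Tm t : 0 <= Tm -> 0 <= clamp Tm t <= Tm.
Proof. intros h. unfold clamp, Rmax, Rmin. destruct (Rle_dec Tm t); destruct (Rle_dec 0 _); lra. Qed.

Lemma clamp_id Tm t : 0 <= t <= Tm -> clamp Tm t = t.
Proof. intros h. unfold clamp, Rmax, Rmin. destruct (Rle_dec Tm t); destruct (Rle_dec 0 _); lra. Qed.

Lemma clamp_lip Tm s t : 0 <= Tm -> Rabs (clamp Tm s - clamp Tm t) <= Rabs (s - t).
Proof.
  intros h. unfold clamp, Rmax, Rmin.
  destruct (Rle_dec Tm s); destruct (Rle_dec Tm t); repeat destruct (Rle_dec 0 _);
  unfold Rabs; repeat destruct (Rcase_abs _); lra.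
Qed.

Lemma max_rect (Phi : R -> R -> R) Rr Tm :
  0 < Rr -> 0 < Tm -> UC Phi ->
  exists x0 t0, -Rr <= x0 <= Rr /\ 0 <= t0 <= Tm /\
    forall x t, -Rr <= x <= Rr -> 0 <= t <= Tm -> Phi x t <= Phi x0 t0.
Proof.
  intros hR hT HU.
  assert (Hex : forall t, exists x, -Rr <= x <= Rr /\
     forall y, -Rr <= y <= Rr -> Phi y (clamp Tm t) <= Phi x (clamp Tm t)).
  { intros t. destruct (continuity_ab_maj (fun y => Phi y (clamp Tm t)) (-Rr) Rr) as [x [H1 H2]].
    - lra.
    - intros c _. apply cont_pt_intro. intros e he.
      destruct (HU e he) as [d [hd Hd]]. exists d. split; auto. intros x hx.
      pose proof (clamp_range Tm t ltac:(lra)).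
      apply Hd; try lra. rewrite Rminus_diag, Rabs_R0; auto.
    - exists x. split; auto. }
  set (xm := fun t => proj1_sig (constructive_indefinite_description _ (Hex t))).
  assert (Hxm : forall t, -Rr <= xm t <= Rr /\
     forall y, -Rr <= y <= Rr -> Phi y (clamp Tm t) <= Phi (xm t) (clamp Tm t)).
  { intros t. unfold xm. destruct (constructive_indefinite_description _ (Hex t)). simpl. auto. }
  set (m := fun t => Phi (xm t) (clamp Tm t)).
  destruct (continuity_ab_maj m 0 Tm) as [t0 [Hm Ht0]].
  - lra.
  - intros c _. apply cont_pt_intro. intros e he.
    destruct (HU (e/2) ltac:(lra)) as [d [hd Hd]]. exists d. split; auto. intros s hs.
    pose proof (clamp_range Tm s ltac:(lra)). pose proof (clamp_range Tm c ltac:(lra)).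
    pose proof (clamp_lip Tm s c ltac:(lra)).
    destruct (Hxm s) as [xs Hs]. destruct (Hxm c) as [xc Hc].
    assert (A1 : Rabs (Phi (xm c) (clamp Tm s) - Phi (xm c) (clamp Tm c)) < e/2).
    { apply Hd; try lra. rewrite Rminus_diag, Rabs_R0; auto. }
    assert (A2 : Rabs (Phi (xm s) (clamp Tm c) - Phi (xm s) (clamp Tm s)) < e/2).
    { apply Hd; try lra. rewrite Rminus_diag, Rabs_R0; auto. rewrite Rabs_minus_sym. lra. }
    specialize (Hs (xm c) xc). specialize (Hc (xm s) xs).
    unfold m. apply Rabs_def1; apply Rabs_def2 in A1; apply Rabs_def2 in A2; lra.
  - exists (xm t0), t0. destruct (Hxm t0) as [H0 _]. split; auto. split; auto.
    intros x t hx ht. rewrite <- (clamp_id Tm t ht).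
    destruct (Hxm t) as [_ H1]. specialize (H1 x hx). specialize (Hm t ht).
    unfold m in Hm. rewrite (clamp_id Tm t0 Ht0) in Hm. rewrite (clamp_id Tm t ht) in *. lra.
Qed.

Lemma comp_visc (F : R -> R) (eps : R) (ue V Vt Vx Vxx : R -> R -> R) :
  visc_sol_viscous F eps g ue -> BUC_half ue -> C12_with V Vt Vx Vxx -> UC V ->
  (forall x, V x 0 <= g x) ->
  (forall x t, 0 < t -> Vt x t + F (Vx x t) - eps * Vxx x t < 0) ->
  (exists Rr Tm, 0 < Rr /\ 0 < Tm /\ forall x t, 0 <= t -> (Rr <= Rabs x \/ Tm <= t) -> V x t < ue x t) ->
  forall x t, 0 <= t -> V x t <= ue x t.
Proof.
  intros [Hinit [_ [_ Hsup]]] HB HC HU H0 Hsub [Rr [Tm [hR [hT Hout]]]] x1 t1 ht1.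
  destruct (Rle_dec (V x1 t1) (ue x1 t1)) as [ok|nok]; auto. exfalso.
  assert (in1 : Rabs x1 < Rr /\ t1 < Tm).
  { split.
    - destruct (Rlt_dec (Rabs x1) Rr) as [a|a]; auto. exfalso.
      assert (V x1 t1 < ue x1 t1) by (apply Hout; auto; left; lra). lra.
    - destruct (Rlt_dec t1 Tm) as [a|a]; auto. exfalso.
      assert (V x1 t1 < ue x1 t1) by (apply Hout; auto; right; lra). lra. }
  set (Phi := fun x t => V x t - ue x t).
  destruct (max_rect Phi Rr Tm hR hT (UC_minus _ _ HU (UC_BUC _ HB))) as [x0 [t0 [hx0 [ht0 Hmax]]]].
  assert (P1 : Phi x1 t1 <= Phi x0 t0).
  { destruct in1 as [a b]. apply Hmax; [|lra]. apply Rabs_def2 in a. lra. }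
  assert (Ppos : 0 < Phi x0 t0) by (unfold Phi in *; lra).
  assert (Hglob : forall x t, 0 <= t -> Phi x t <= Phi x0 t0).
  { intros x t ht. destruct (Rle_dec Rr (Rabs x)) as [a|a].
    - assert (V x t < ue x t) by (apply Hout; auto). unfold Phi in *. lra.
    - destruct (Rle_dec Tm t) as [b|b].
      + assert (V x t < ue x t) by (apply Hout; auto). unfold Phi in *. lra.
      + apply Hmax; [|lra]. assert (Rabs x < Rr) by lra. apply Rabs_def2 in H. lra. }
  assert (t0pos : 0 < t0).
  { destruct ht0 as [[a|a] _]; auto. subst t0. unfold Phi in Ppos. rewrite Hinit in Ppos.
    specialize (H0 x0). lra. }
  specialize (Hsup V Vt Vx Vxx x0 t0 t0pos HC).
  assert (loc_min_at ue V x0 t0).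
  { exists 1. split; [lra|]. intros x t ht _ _. specialize (Hglob x t ltac:(lra)). unfold Phi in Hglob. lra. }
  specialize (Hsup H). specialize (Hsub x0 t0 t0pos). lra.
Qed.

Lemma comp_HJ (F : R -> R) (u w wt wx : R -> R -> R) :
  visc_sol_HJ F g u -> BUC_half u -> C1_with w wt wx -> UC w ->
  (forall x, g x <= w x 0) ->
  (forall x t, 0 < t -> wt x t + F (wx x t) > 0) ->
  (exists Rr Tm, 0 < Rr /\ 0 < Tm /\ forall x t, 0 <= t -> (Rr <= Rabs x \/ Tm <= t) -> u x t < w x t) ->
  forall x t, 0 <= t -> u x t <= w x t.
Proof.
  intros [Hinit [_ [Hsub _]]] HB HC HU H0 Hsup [Rr [Tm [hR [hT Hout]]]] x1 t1 ht1.
  destruct (Rle_dec (u x1 t1) (w x1 t1)) as [ok|nok]; auto. exfalso.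
  assert (in1 : Rabs x1 < Rr /\ t1 < Tm).
  { split.
    - destruct (Rlt_dec (Rabs x1) Rr) as [a|a]; auto. exfalso.
      assert (u x1 t1 < w x1 t1) by (apply Hout; auto; left; lra). lra.
    - destruct (Rlt_dec t1 Tm) as [a|a]; auto. exfalso.
      assert (u x1 t1 < w x1 t1) by (apply Hout; auto; right; lra). lra. }
  set (Phi := fun x t => u x t - w x t).
  destruct (max_rect Phi Rr Tm hR hT (UC_minus _ _ (UC_BUC _ HB) HU)) as [x0 [t0 [hx0 [ht0 Hmax]]]].
  assert (P1 : Phi x1 t1 <= Phi x0 t0).
  { destruct in1 as [a b]. apply Hmax; [|lra]. apply Rabs_def2 in a. lra. }
  assert (Ppos : 0 < Phi x0 t0) by (unfold Phi in *; lra).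
  assert (Hglob : forall x t, 0 <= t -> Phi x t <= Phi x0 t0).
  { intros x t ht. destruct (Rle_dec Rr (Rabs x)) as [a|a].
    - assert (u x t < w x t) by (apply Hout; auto). unfold Phi in *. lra.
    - destruct (Rle_dec Tm t) as [b|b].
      + assert (u x t < w x t) by (apply Hout; auto). unfold Phi in *. lra.
      + apply Hmax; [|lra]. assert (Rabs x < Rr) by lra. apply Rabs_def2 in H. lra. }
  assert (t0pos : 0 < t0).
  { destruct ht0 as [[a|a] _]; auto. subst t0. unfold Phi in Ppos. rewrite Hinit in Ppos.
    specialize (H0 x0). lra. }
  specialize (Hsub w wt wx x0 t0 t0pos HC).
  assert (loc_max_at u w x0 t0).
  { exists 1. split; [lra|]. intros x t ht _ _. specialize (Hglob x t ltac:(lra)). unfold Phi in Hglob. lra. }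
  specialize (Hsub H). specialize (Hsup x0 t0 t0pos). lra.
Qed.

Section Ffacts.
Variable F : R -> R.
Variable L : R.
Hypothesis HL : forall p q, Rabs p <= 2 -> Rabs q <= 2 -> Rabs (F p - F q) <= L * Rabs (p - q).
Hypothesis H01 : forall p, 0 <= p <= 1 -> F p = p.
Hypothesis Hm10 : forall p, -1 <= p <= 0 -> F p <= p.

Lemma L_nonneg : 0 <= L.
Proof. pose proof (HL 1 0 ltac:(rewrite Rabs_R1; lra) ltac:(rewrite Rabs_R0; lra)).
  rewrite (H01 1), (H01 0) in H by lra. rewrite Rminus_0_r, Rabs_R1 in H. lra. Qed.

Lemma F_upper p a : 0 <= a <= 1 -> -1 - a <= p <= 1 + a -> F p <= p + (L + 1) * a.
Proof.
  intros ha hp. pose proof L_nonneg.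
  destruct (Rle_dec 0 p).
  - destruct (Rle_dec p 1).
    + rewrite H01 by lra. nra.
    + pose proof (HL p 1 ltac:(apply Rabs_le; lra) ltac:(rewrite Rabs_R1; lra)).
      rewrite (H01 1) in H0 by lra.
      rewrite (Rabs_right (p - 1)) in H0 by lra.
      pose proof (Rle_abs (F p - 1)). nra.
  - destruct (Rle_dec (-1) p).
    + apply Rle_trans with p; [apply Hm10; lra|]. nra.
    + pose proof (HL p (-1) ltac:(apply Rabs_le; lra) ltac:(apply Rabs_le; lra)).
      pose proof (Hm10 (-1) ltac:(lra)).
      rewrite (Rabs_left (p - -1)) in H0 by lra.
      pose proof (Rle_abs (F p - F (-1))). nra.
Qed.

Lemma F_lower p a : 0 <= a <= 1 -> - a <= p <= 1 + a -> p - (L + 1) * a <= F p.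
Proof.
  intros ha hp. pose proof L_nonneg.
  destruct (Rle_dec 0 p).
  - destruct (Rle_dec p 1).
    + rewrite H01 by lra. nra.
    + pose proof (HL p 1 ltac:(apply Rabs_le; lra) ltac:(rewrite Rabs_R1; lra)).
      rewrite (H01 1) in H0 by lra.
      rewrite (Rabs_right (p - 1)) in H0 by lra.
      pose proof (Rle_abs (- (F p - 1))). rewrite Rabs_Ropp in H1. nra.
  - pose proof (HL p 0 ltac:(apply Rabs_le; lra) ltac:(rewrite Rabs_R0; lra)).
    rewrite (H01 0) in H0 by lra. rewrite Rminus_0_r, Rminus_0_r in H0.
    rewrite (Rabs_left p) in H0 by lra.
    pose proof (Rle_abs (- F p)). rewrite Rabs_Ropp in H1. nra.
Qed.
End Ffacts.

Lemma c2_opp f : continuous2 f -> continuous2 (fun x t => - f x t).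
Proof. intros H x t e he. destruct (H x t e he) as [d [hd Hd]]. exists d. split; [auto|].
  intros y s hy hs. replace (- f y s - - f x t) with (- (f y s - f x t)) by ring. rewrite Rabs_Ropp. auto. Qed.
Lemma c2_minus f g : continuous2 f -> continuous2 g -> continuous2 (fun x t => f x t - g x t).
Proof. intros Hf Hg. apply (c2_plus f (fun x t => - g x t)); auto. apply c2_opp; auto. Qed.
Lemma c2_div f c : continuous2 f -> continuous2 (fun x t => f x t / c).
Proof. intros Hf. apply (c2_mult f (fun _ _ => / c)); auto. apply c2_const. Qed.

Ltac c2step :=
  first [ apply c2_const | apply c2_fst | apply c2_snd
  | match goal with
    | |- continuous2 Rminus => apply (c2_minus (fun x _ => x) (fun _ t => t))
    | |- continuous2 Rplus => apply (c2_plus (fun x _ => x) (fun _ t => t))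
    | |- continuous2 (fun x t => _ + _) => apply c2_plus
    | |- continuous2 (fun x t => _ - _) => apply c2_minus
    | |- continuous2 (fun x t => - _) => apply c2_opp
    | |- continuous2 (fun x t => _ * _) => apply c2_mult
    | |- continuous2 (fun x t => _ / _) => apply c2_div
    | |- continuous2 (fun x t => _ _) => apply c2_comp
    end ].
Ltac c2tac := repeat c2step.

Definition Sq (x : R) : R := sqrt (1 + x * x).
Definition sig (u : R) : R := exp u / (1 + exp u).
Definition hsp (c y : R) : R := c * ln (1 + exp ((y + 1) / c)).

Lemma Sq_pos x : 0 < 1 + x * x.
Proof. nra. Qed.
Lemma Sq_deriv x : is_derive Sq x (x / Sq x).
Proof. unfold Sq. pose proof (Sq_pos x). auto_derive; [lra|]. field.
  apply Rgt_not_eq. apply sqrt_lt_R0. lra. Qed.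
Lemma Sq_ge1 x : 1 <= Sq x.
Proof. unfold Sq. apply Rle_trans with (sqrt 1); [rewrite sqrt_1; lra|]. apply sqrt_le_1_alt. nra. Qed.
Lemma Sq_ge_abs x : Rabs x <= Sq x.
Proof. unfold Sq. rewrite <- sqrt_Rsqr_abs. apply sqrt_le_1_alt. unfold Rsqr. nra. Qed.
Lemma Sq_ratio x : Rabs (x / Sq x) <= 1.
Proof. pose proof (Sq_ge1 x). pose proof (Sq_ge_abs x). unfold Rdiv. rewrite Rabs_mult.
  rewrite (Rabs_right (/ Sq x)) by (left; apply Rinv_0_lt_compat; lra).
  apply (Rmult_le_reg_r (Sq x)); [lra|]. rewrite Rmult_assoc, Rinv_l by lra. lra. Qed.
Lemma Sq_cont z : continuity_pt Sq z.
Proof. apply deriv_cont. intros x. eexists. apply Sq_deriv. Qed.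

Lemma sig_range u : 0 < sig u < 1.
Proof. unfold sig. pose proof (exp_pos u). split.
  - apply Rdiv_lt_0_compat; lra.
  - apply (Rmult_lt_reg_r (1 + exp u)); [lra|]. unfold Rdiv. rewrite Rmult_assoc, Rinv_l by lra. lra.
Qed.
Lemma sig_cont z : continuity_pt sig z.
Proof. apply deriv_cont. intros x. unfold sig. auto_derive. pose proof (exp_pos x). lra. Qed.

Lemma hsp_cont c z : c <> 0 -> continuity_pt (hsp c) z.
Proof. intros hc. apply deriv_cont. intros x. unfold hsp. auto_derive.
  pose proof (exp_pos ((x + 1) / c)). repeat split; auto; lra. Qed.

Lemma hsp_ge c y : 0 < c -> Rmax (1 + y) 0 <= hsp c y.
Proof.
  intros hc. unfold hsp. pose proof (exp_pos ((y + 1) / c)).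
  assert (0 <= ln (1 + exp ((y + 1) / c))).
  { rewrite <- ln_1. apply ln_le; lra. }
  assert ((y + 1) / c <= ln (1 + exp ((y + 1) / c))).
  { rewrite <- (ln_exp ((y+1)/c)) at 1. apply ln_le; [apply exp_pos|lra]. }
  unfold Rmax. destruct (Rle_dec (1 + y) 0).
  - apply Rmult_le_pos; lra.
  - apply Rmult_le_compat_l with (r := c) in H1; [|lra].
    replace (c * ((y + 1) / c)) with (1 + y) in H1 by (field; lra). lra.
Qed.

Definition wb (c a x t : R) : R := hsp c (x - t) + a * Sq x + c * (1 + t).
Definition Sqd (x : R) : R := x / Sq x.
Definition wbx (c a x t : R) : R := sig ((x - t + 1) / c) + a * Sqd x.
Definition wbt (c a x t : R) : R := - sig ((x - t + 1) / c) + c.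

Lemma wb_dt c a x t : 0 < c -> is_derive (fun s => wb c a x s) t (wbt c a x t).
Proof.
  intros hc. unfold wb, wbt, hsp, sig, Sq.
  pose proof (exp_pos ((x - t + 1) / c)). pose proof (Sq_pos x).
  unfold Rminus, Rdiv in *.
  auto_derive; [repeat split; lra|].
  set (Z := exp _) in *. field. split; lra.
Qed.

Lemma wb_dx c a x t : 0 < c -> is_derive (fun y => wb c a y t) x (wbx c a x t).
Proof.
  intros hc. unfold wb, wbx, hsp, sig, Sqd.
  pose proof (exp_pos ((x - t + 1) / c)).
  unfold Rminus, Rdiv in *.
  auto_derive; [repeat split; try lra; eexists; apply Sq_deriv|].
  rewrite (Der_eta Sq x _ (Sq_deriv x)).
  set (Z := exp _) in *. pose proof (Sq_ge1 x). field. split; lra.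
Qed.

Lemma Sqd_cont z : continuity_pt Sqd z.
Proof. apply deriv_cont. intros x. unfold Sqd. pose proof (Sq_ge1 x).
  auto_derive; [split; [eexists; apply Sq_deriv|lra]]. Qed.

Lemma ln2_lt1 : ln 2 < 1.
Proof. pose proof (exp_ineq1 1 ltac:(lra)). apply Rlt_le_trans with (ln (exp 1)).
  apply ln_increasing; lra. rewrite ln_exp. lra. Qed.

Lemma HJ_bound (F : R -> R) (u : R -> R -> R) (c : R) :
  loc_lipschitz F -> (forall p, 0 <= p <= 1 -> F p = p) ->
  BUC_half u -> visc_sol_HJ F g u -> 0 < c <= 1 -> u 0 1 <= 4 * c.
Proof.
  intros Hlip H01 HB Hv hc.
  destruct (Hlip 2) as [L HL].
  assert (hL : 0 <= L).
  { pose proof (HL 1 0 ltac:(rewrite Rabs_R1; lra) ltac:(rewrite Rabs_R0; lra)).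
    rewrite (H01 1), (H01 0) in H by lra. rewrite Rminus_0_r, Rabs_R1 in H. lra. }
  set (a := c / (2 * (L + 2))).
  assert (ha : 0 < a <= c / 2).
  { unfold a. split. apply Rdiv_lt_0_compat; lra.
    unfold Rdiv. apply Rmult_le_compat_l; [lra|]. apply Rinv_le_contravar; lra. }
  assert (haL : (L + 2) * a = c / 2) by (unfold a; field; lra).
  pose proof HB as [[M HM] HUu].
  assert (hM : 0 <= M) by (specialize (HM 0 0 ltac:(lra)); pose proof (Rabs_pos (u 0 0)); lra).
  assert (Hle : forall x t, 0 <= t -> u x t <= wb c a x t).
  { apply (comp_HJ F u (wb c a) (wbt c a) (wbx c a) Hv HB).
    - split; [|split; [|split; [|split]]].
      + intros x t. apply is_derive_Reals. apply wb_dt; lra.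
      + intros x t. apply is_derive_Reals. apply wb_dx; lra.
      + unfold wb. c2tac; intros z; first [apply hsp_cont; apply Rgt_not_eq; lra | apply Sq_cont].
      + unfold wbt. c2tac; intros z; apply sig_cont.
      + unfold wbx. c2tac; intros z; first [apply sig_cont | apply Sqd_cont].
    - apply (UC_lip (wb c a) (wbx c a) (wbt c a) (1 + a) (1 + c)); try lra.
      + intros; apply wb_dx; lra.
      + intros; apply wb_dt; lra.
      + intros x t _. unfold wbx. pose proof (sig_range ((x - t + 1) / c)).
        pose proof (Sq_ratio x). fold (Sqd x) in H0.
        eapply Rle_trans; [apply Rabs_triang|]. rewrite Rabs_mult, (Rabs_right a) by lra.
        rewrite Rabs_right by lra. nra.
      + intros x t _. unfold wbt. pose proof (sig_range ((x - t + 1) / c)).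
        apply Rabs_le. lra.
    - intros x. unfold wb, g. rewrite Rminus_0_r. pose proof (hsp_ge c x ltac:(lra)).
      pose proof (Sq_ge1 x). assert (Rmax (1 - Rabs x) 0 <= Rmax (1 + x) 0).
      { apply Rle_max_compat_r. pose proof (Rle_abs (-x)). rewrite Rabs_Ropp in H1. lra. }
      nra.
    - intros x t _. unfold wbt, wbx.
      pose proof (sig_range ((x - t + 1) / c)). pose proof (Sq_ratio x). fold (Sqd x) in H0.
      assert (-1 <= Sqd x <= 1) by (unfold Rabs in H0; destruct (Rcase_abs (Sqd x)); lra).
      set (p := sig ((x - t + 1) / c) + a * Sqd x).
      assert (-a <= p <= 1 + a) by (unfold p; nra).
      pose proof (F_lower F L HL H01 p a ltac:(lra) H2).
      unfold p in *. nra.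
    - exists (M / a + 1), (M / c + 1). split; [|split].
      + assert (0 <= M / a) by (apply Rmult_le_pos; [lra|left; apply Rinv_0_lt_compat; lra]). lra.
      + assert (0 <= M / c) by (apply Rmult_le_pos; [lra|left; apply Rinv_0_lt_compat; lra]). lra.
      + intros x t ht hout. specialize (HM x t ht). pose proof (Rle_abs (u x t)).
        unfold wb. pose proof (hsp_ge c (x - t) ltac:(lra)).
        assert (0 <= hsp c (x - t)) by (eapply Rle_trans; [apply Rmax_r|eauto]).
        pose proof (Sq_ge_abs x). pose proof (Sq_ge1 x).
        destruct hout as [hx|ht2].
        * assert (K1 : a * (M / a + 1) <= a * Sq x) by (apply Rmult_le_compat_l; lra).
          replace (a * (M / a + 1)) with (M + a) in K1 by (field; lra). nra.
        * assert (K1 : c * (M / c + 1) <= c * t) by (apply Rmult_le_compat_l; lra).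
          replace (c * (M / c + 1)) with (M + c) in K1 by (field; lra).
          assert (0 <= a * Sq x) by nra. nra. }
  specialize (Hle 0 1 ltac:(lra)). unfold wb, hsp, Sq in Hle.
  replace ((0 - 1 + 1) / c) with 0 in Hle by (field; lra).
  rewrite exp_0 in Hle. replace (1 + 0 * 0) with 1 in Hle by ring. rewrite sqrt_1 in Hle.
  replace (1 + 1) with 2 in Hle by ring.
  pose proof ln2_lt1. nra.
Qed.

Lemma vf_chain (a b : R -> R) (da db t : R) :
  is_derive a t da -> is_derive b t db -> 0 < b t ->
  is_derive (fun t => vf (a t) (b t)) t (da * vs (a t) (b t) + db * vss (a t) (b t)).
Proof.
  intros Ha Hb hb. unfold vf, vs, vss.
  assert (H2 : is_derive (fun t => a t - 2) t da) by (eapply is_derive_val; [apply (is_derive_minus a (fun _ => 2)); [exact Ha| apply is_derive_const]|simpl; unfold minus, plus, opp, zero; simpl; ring]).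
  assert (H4 : is_derive (fun t => a t - 4) t da) by (eapply is_derive_val; [apply (is_derive_minus a (fun _ => 4)); [exact Ha| apply is_derive_const]|simpl; unfold minus, plus, opp, zero; simpl; ring]).
  pose proof (W_chain a b da db t Ha Hb hb) as W0.
  pose proof (W_chain (fun t => a t - 2) b da db t H2 Hb hb) as W2.
  pose proof (W_chain (fun t => a t - 4) b da db t H4 Hb hb) as W4.
  eapply is_derive_val.
  - apply (is_derive_plus (fun t => Wf (a t) (b t) - 2 * Wf (a t - 2) (b t)) (fun t => Wf (a t - 4) (b t))); [|exact W4].
    apply (is_derive_minus (fun t => Wf (a t) (b t)) (fun t => 2 * Wf (a t - 2) (b t))); [exact W0|].
    apply (is_derive_scal (fun t => Wf (a t - 2) (b t))). exact W2.
  - simpl. unfold minus, plus, opp, scal, mult; simpl. unfold mult; simpl. ring.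
Qed.

Lemma vs_chain (a : R -> R) (th da x : R) :
  is_derive a x da -> 0 < th ->
  is_derive (fun x => vs (a x) th) x (da * vss (a x) th).
Proof.
  intros Ha hth. unfold vs, vss.
  assert (H2 : is_derive (fun t => a t - 2) x da) by (eapply is_derive_val; [apply (is_derive_minus a (fun _ => 2)); [exact Ha| apply is_derive_const]|simpl; unfold minus, plus, opp, zero; simpl; ring]).
  assert (H4 : is_derive (fun t => a t - 4) x da) by (eapply is_derive_val; [apply (is_derive_minus a (fun _ => 4)); [exact Ha| apply is_derive_const]|simpl; unfold minus, plus, opp, zero; simpl; ring]).
  pose proof (Wy_chain a th da x Ha hth) as W0.
  pose proof (Wy_chain (fun t => a t - 2) th da x H2 hth) as W2.
  pose proof (Wy_chain (fun t => a t - 4) th da x H4 hth) as W4.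
  eapply is_derive_val.
  - apply (is_derive_plus (fun t => Wy (a t) th - 2 * Wy (a t - 2) th) (fun t => Wy (a t - 4) th)); [|exact W4].
    apply (is_derive_minus (fun t => Wy (a t) th) (fun t => 2 * Wy (a t - 2) th)); [exact W0|].
    apply (is_derive_scal (fun t => Wy (a t - 2) th)). exact W2.
  - simpl. unfold minus, plus, opp, scal, mult; simpl. unfold mult; simpl. ring.
Qed.

Definition Tm (tau beta t : R) : R := ((t + tau) + sqrt ((t + tau) * (t + tau) + beta * beta)) / 2.
Definition Tm' (tau beta t : R) : R := (1 + (t + tau) / sqrt ((t + tau) * (t + tau) + beta * beta)) / 2.

Lemma Tm_rad_pos tau beta t : 0 < beta -> 0 < (t + tau) * (t + tau) + beta * beta.
Proof. intros hb. pose proof (Rle_0_sqr (t + tau)). unfold Rsqr in *.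
  assert (0 < beta * beta) by (apply Rmult_lt_0_compat; auto). lra. Qed.

Lemma Tm_ge tau beta t : 0 < beta -> Rabs (t + tau) < sqrt ((t + tau) * (t + tau) + beta * beta).
Proof.
  intros hb. rewrite <- sqrt_Rsqr_abs. apply sqrt_lt_1_alt.
  pose proof (Rle_0_sqr (t + tau)). unfold Rsqr in *.
  assert (0 < beta * beta) by (apply Rmult_lt_0_compat; auto). lra.
Qed.

Lemma Tm_pos tau beta t : 0 < beta -> 0 < Tm tau beta t.
Proof. intros hb. unfold Tm. pose proof (Tm_ge tau beta t hb). pose proof (Rle_abs (-(t+tau))).
  rewrite Rabs_Ropp in H0. lra. Qed.

Lemma Tm_deriv tau beta t : 0 < beta -> is_derive (Tm tau beta) t (Tm' tau beta t).
Proof.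
  intros hb. unfold Tm, Tm'. pose proof (Tm_rad_pos tau beta t hb).
  assert (0 < sqrt ((t + tau) * (t + tau) + beta * beta)) by (apply sqrt_lt_R0; auto).
  auto_derive; [lra|]. set (S := sqrt _) in *. field. lra.
Qed.

Lemma Tm_ex tau beta t : 0 < beta -> ex_derive (Tm tau beta) t.
Proof. intros. eexists. apply Tm_deriv. auto. Qed.

Lemma c2_ext f g : (forall x t, f x t = g x t) -> continuous2 f -> continuous2 g.
Proof. intros He Hf x t e he. destruct (Hf x t e he) as [d [hd Hd]]. exists d. split; [auto|].
  intros y s hy hs. rewrite <- !He. auto. Qed.

Definition sqb (b : R -> R) (t : R) : R := sqrt (b t).
Definition isq (b : R -> R) (t : R) : R := / (2 * sqrt (b t)).

Lemma cont_sqrt_comp (b : R -> R) : (forall t, 0 < b t) -> (forall t, ex_derive b t) ->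
  forall z, continuity_pt (sqb b) z.
Proof. intros hp hd. apply deriv_cont. intros x. unfold sqb. auto_derive. split; [apply hd|]. split; [apply hp|auto]. Qed.

Lemma cont_isqrt_comp (b : R -> R) : (forall t, 0 < b t) -> (forall t, ex_derive b t) ->
  forall z, continuity_pt (isq b) z.
Proof. intros hp hd. apply deriv_cont. intros x. unfold isq.
  assert (0 < sqrt (b x)) by (apply sqrt_lt_R0; apply hp).
  auto_derive. split; [apply hd|]. split; [apply hp|]. split; [|auto]. lra. Qed.

Lemma Nf_cont z : continuity_pt Nf z.
Proof. apply deriv_cont. apply ex_Nf. Qed.
Lemma gau_cont' z : continuity_pt gau z.
Proof. apply gau_cont. Qed.

Lemma c2_Wf (A : R -> R -> R) (b : R -> R) : continuous2 A -> (forall t, 0 < b t) ->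
  (forall t, ex_derive b t) -> continuous2 (fun x t => Wf (A x t) (b t)).
Proof.
  intros HA hp hd.
  apply (c2_ext (fun x t => A x t * Nf (A x t * isq b t)
     + sqb b t * cc * gau (A x t * isq b t))).
  { intros. unfold Wf, isq, sqb. unfold Rdiv. auto. }
  pose proof (cont_sqrt_comp b hp hd). pose proof (cont_isqrt_comp b hp hd).
  c2tac; auto; try apply Nf_cont; try apply gau_cont.
Qed.

Lemma c2_Wy (A : R -> R -> R) (b : R -> R) : continuous2 A -> (forall t, 0 < b t) ->
  (forall t, ex_derive b t) -> continuous2 (fun x t => Wy (A x t) (b t)).
Proof.
  intros HA hp hd.
  apply (c2_ext (fun x t => Nf (A x t * isq b t))).
  { intros. unfold Wy, isq. unfold Rdiv. auto. }
  pose proof (cont_isqrt_comp b hp hd).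
  c2tac; auto; try apply Nf_cont.
Qed.

Lemma c2_Wyy (A : R -> R -> R) (b : R -> R) : continuous2 A -> (forall t, 0 < b t) ->
  (forall t, ex_derive b t) -> continuous2 (fun x t => Wyy (A x t) (b t)).
Proof.
  intros HA hp hd.
  apply (c2_ext (fun x t => cc * gau (A x t * isq b t) * isq b t)).
  { intros. unfold Wyy, isq. unfold Rdiv. auto. }
  pose proof (cont_isqrt_comp b hp hd).
  c2tac; auto; try apply gau_cont.
Qed.

Lemma c2_vf (A : R -> R -> R) (b : R -> R) : continuous2 A -> (forall t, 0 < b t) ->
  (forall t, ex_derive b t) -> continuous2 (fun x t => vf (A x t) (b t)).
Proof.
  intros HA hp hd. unfold vf.
  apply c2_plus; [apply c2_minus|].
  - apply (c2_Wf A b); auto.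
  - apply c2_mult; [apply c2_const|]. apply (c2_Wf (fun x t => A x t - 2) b); auto. c2tac; auto.
  - apply (c2_Wf (fun x t => A x t - 4) b); auto. c2tac; auto.
Qed.

Lemma c2_vs (A : R -> R -> R) (b : R -> R) : continuous2 A -> (forall t, 0 < b t) ->
  (forall t, ex_derive b t) -> continuous2 (fun x t => vs (A x t) (b t)).
Proof.
  intros HA hp hd. unfold vs.
  apply c2_plus; [apply c2_minus|].
  - apply (c2_Wy A b); auto.
  - apply c2_mult; [apply c2_const|]. apply (c2_Wy (fun x t => A x t - 2) b); auto. c2tac; auto.
  - apply (c2_Wy (fun x t => A x t - 4) b); auto. c2tac; auto.
Qed.

Lemma c2_vss (A : R -> R -> R) (b : R -> R) : continuous2 A -> (forall t, 0 < b t) ->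
  (forall t, ex_derive b t) -> continuous2 (fun x t => vss (A x t) (b t)).
Proof.
  intros HA hp hd. unfold vss.
  apply c2_plus; [apply c2_minus|].
  - apply (c2_Wyy A b); auto.
  - apply c2_mult; [apply c2_const|]. apply (c2_Wyy (fun x t => A x t - 2) b); auto. c2tac; auto.
  - apply (c2_Wyy (fun x t => A x t - 4) b); auto. c2tac; auto.
Qed.

Definition Sqdd (x : R) : R := / ((1 + x * x) * Sq x).

Lemma Sqd_deriv x : is_derive Sqd x (Sqdd x).
Proof.
  unfold Sqd, Sqdd. pose proof (Sq_ge1 x).
  auto_derive; [split; [eexists; apply Sq_deriv|lra]|].
  rewrite (Der_eta Sq x _ (Sq_deriv x)).
  assert (Sq x * Sq x = 1 + x * x) by (unfold Sq; apply sqrt_sqrt; nra).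
  transitivity ((Sq x * Sq x - x * x) / (Sq x * Sq x * Sq x)); [field; lra|].
  rewrite H0. field. split; [lra|nra].
Qed.

Lemma Sqdd_range x : 0 < Sqdd x <= 1.
Proof.
  unfold Sqdd. pose proof (Sq_ge1 x). assert (1 <= 1 + x * x) by nra.
  split. apply Rinv_0_lt_compat. nra.
  rewrite <- Rinv_1. apply Rinv_le_contravar; nra.
Qed.

Lemma Sqdd_cont z : continuity_pt Sqdd z.
Proof. apply deriv_cont. intros x. unfold Sqdd. pose proof (Sq_ge1 x).
  auto_derive. split; [eexists; apply Sq_deriv|]. split; [|auto]. nra. Qed.

Section Barrier.
Variables (q lam tau beta c1 al B : R).
Hypothesis hq : 0 < q.
Hypothesis hlam : 0 < lam.
Hypothesis hbeta : 0 < beta.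

Definition xi (x t : R) : R := (x - t + 1) / (q * lam).
Definition th (t : R) : R := Tm tau beta t / (lam * lam).

Definition Vb (x t : R) : R := q * lam * vf (xi x t) (th t) - B - c1 * (1 + t) - al * Sq x.
Definition Vbx (x t : R) : R := vs (xi x t) (th t) - al * Sqd x.
Definition Vbxx (x t : R) : R := vss (xi x t) (th t) / (q * lam) - al * Sqdd x.
Definition Vbt (x t : R) : R :=
  - vs (xi x t) (th t) + q * lam * vss (xi x t) (th t) * (Tm' tau beta t / (lam * lam)) - c1.

Lemma th_pos t : 0 < th t.
Proof. unfold th. apply Rdiv_lt_0_compat. apply Tm_pos; auto. nra. Qed.

Lemma th_deriv t : is_derive th t (Tm' tau beta t / (lam * lam)).
Proof. unfold th. pose proof (Tm_deriv tau beta t hbeta).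
  auto_derive; [eexists; eauto|]. rewrite (Der_eta _ _ _ H). field. repeat split; intro; nra. Qed.

Lemma th_ex t : ex_derive th t.
Proof. eexists; apply th_deriv. Qed.

Lemma Vb_dt x t : is_derive (fun s => Vb x s) t (Vbt x t).
Proof.
  assert (Ha : is_derive (fun s => xi x s) t (- / (q * lam))).
  { unfold xi. auto_derive; auto. field. repeat split; intro; nra. }
  pose proof (vf_chain (fun s => xi x s) th _ _ t Ha (th_deriv t) (th_pos t)) as Hv.
  unfold Vb, Vbt. eapply is_derive_val.
  - apply (is_derive_minus (fun s => q * lam * vf (xi x s) (th s) - B - c1 * (1 + s)) (fun _ => al * Sq x)); [|apply is_derive_const].
    apply (is_derive_minus (fun s => q * lam * vf (xi x s) (th s) - B) (fun s => c1 * (1 + s))).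
    + apply (is_derive_minus (fun s => q * lam * vf (xi x s) (th s)) (fun _ => B)); [|apply is_derive_const].
      apply (is_derive_scal (fun s => vf (xi x s) (th s))). exact Hv.
    + auto_derive; auto.
  - simpl. unfold minus, plus, opp, scal, mult, zero; simpl. unfold mult; simpl. field. repeat split; intro; nra.
Qed.

Lemma Vb_dx x t : is_derive (fun y => Vb y t) x (Vbx x t).
Proof.
  assert (Ha : is_derive (fun y => xi y t) x (/ (q * lam))).
  { unfold xi. auto_derive; auto. field. repeat split; intro; nra. }
  pose proof (vf_chain (fun y => xi y t) (fun _ => th t) _ 0 x Ha (is_derive_const _ _) (th_pos t)) as Hv.
  unfold Vb, Vbx. eapply is_derive_val.
  - apply (is_derive_minus (fun y => q * lam * vf (xi y t) (th t) - B - c1 * (1 + t)) (fun y => al * Sq y)).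
    + apply (is_derive_minus (fun y => q * lam * vf (xi y t) (th t) - B) (fun _ => c1 * (1 + t))); [|apply is_derive_const].
      apply (is_derive_minus (fun y => q * lam * vf (xi y t) (th t)) (fun _ => B)); [|apply is_derive_const].
      apply (is_derive_scal (fun y => vf (xi y t) (th t))). exact Hv.
    + apply (is_derive_scal Sq). apply Sq_deriv.
  - simpl. unfold minus, plus, opp, scal, mult, zero; simpl. unfold mult; simpl. unfold Sqd.
    pose proof (Sq_ge1 x). field. repeat split; intro; nra.
Qed.

Lemma Vbx_dx x t : is_derive (fun y => Vbx y t) x (Vbxx x t).
Proof.
  assert (Ha : is_derive (fun y => xi y t) x (/ (q * lam))).
  { unfold xi. auto_derive; auto. field. repeat split; intro; nra. }
  pose proof (vs_chain (fun y => xi y t) (th t) _ x Ha (th_pos t)) as Hv.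
  unfold Vbx, Vbxx. eapply is_derive_val.
  - apply (is_derive_minus (fun y => vs (xi y t) (th t)) (fun y => al * Sqd y)); [exact Hv|].
    apply (is_derive_scal Sqd). apply Sqd_deriv.
  - simpl. unfold minus, plus, opp, scal, mult, zero; simpl. unfold mult; simpl. field. repeat split; intro; nra.
Qed.

Lemma Vb_C12 : C12_with Vb Vbt Vbx Vbxx.
Proof.
  split; [split; [|split; [|split; [|split]]]|split].
  - intros x t. apply is_derive_Reals. apply Vb_dt.
  - intros x t. apply is_derive_Reals. apply Vb_dx.
  - unfold Vb.
    apply c2_minus; [apply c2_minus; [apply c2_minus|]|].
    + apply c2_mult; [apply c2_const|]. apply (c2_vf xi th); [unfold xi; c2tac|apply th_pos|apply th_ex].
    + apply c2_const.
    + c2tac.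
    + c2tac. intros; apply Sq_cont.
  - unfold Vbt.
    apply c2_minus; [apply c2_plus|apply c2_const].
    + apply c2_opp. apply (c2_vs xi th); [unfold xi; c2tac|apply th_pos|apply th_ex].
    + apply c2_mult; [apply c2_mult; [apply c2_const|]|].
      * apply (c2_vss xi th); [unfold xi; c2tac|apply th_pos|apply th_ex].
      * apply (c2_comp (fun t => Tm' tau beta t / (lam * lam)) (fun _ t => t)); [|apply c2_snd].
        apply deriv_cont. intros z. unfold Tm'. pose proof (Tm_rad_pos tau beta z hbeta).
        assert (0 < sqrt ((z + tau) * (z + tau) + beta * beta)) by (apply sqrt_lt_R0; auto).
        auto_derive. repeat split; try lra.
  - unfold Vbx. apply c2_minus.
    + apply (c2_vs xi th); [unfold xi; c2tac|apply th_pos|apply th_ex].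
    + c2tac. intros; apply Sqd_cont.
  - intros x t. apply is_derive_Reals. apply Vbx_dx.
  - unfold Vbxx. apply c2_minus.
    + apply c2_div. apply (c2_vss xi th); [unfold xi; c2tac|apply th_pos|apply th_ex].
    + c2tac. intros; apply Sqdd_cont.
Qed.

End Barrier.

Lemma sqrt_sum_le u b : 0 <= u -> 0 <= b -> sqrt (u * u + b * b) <= u + b.
Proof. intros hu hb. rewrite <- (sqrt_square (u + b)) by lra. apply sqrt_le_1_alt. nra. Qed.

Lemma Tm_lower tau beta t : 0 < beta -> 0 <= t + tau -> t + tau <= Tm tau beta t.
Proof. intros hb hu. unfold Tm. pose proof (Tm_ge tau beta t hb). rewrite Rabs_right in H by lra. lra. Qed.

Lemma Tm_upper tau beta t : 0 < beta -> 0 <= t + tau -> Tm tau beta t <= t + tau + beta / 2.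
Proof. intros hb hu. unfold Tm. pose proof (sqrt_sum_le (t + tau) beta hu ltac:(lra)). lra. Qed.

Lemma Tm'_bound tau beta t : 0 < beta -> 0 < t + tau ->
  0 <= 1 - Tm' tau beta t <= beta * beta / (4 * ((t + tau) * (t + tau))).
Proof.
  intros hb hu. unfold Tm'. set (u := t + tau) in *.
  pose proof (Tm_ge tau beta t hb). fold u in H. rewrite Rabs_right in H by lra.
  set (R0 := sqrt (u * u + beta * beta)) in *.
  assert (HR : R0 * R0 = u * u + beta * beta) by (unfold R0; apply sqrt_sqrt; nra).
  clearbody R0.
  assert (E : 1 - (1 + u / R0) / 2 = beta * beta / (2 * R0 * (R0 + u))).
  { replace (beta * beta) with (R0 * R0 - u * u) by lra. field. lra. }
  rewrite E. split.
  - apply Rmult_le_pos. nra. left. apply Rinv_0_lt_compat. nra.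
  - unfold Rdiv. apply Rmult_le_compat_l. nra. apply Rinv_le_contravar; nra.
Qed.

Lemma Tp_scale k x : 0 < k <= 1/2 -> k * Tp ((x - 0 + 1) / k) <= g x.
Proof.
  intros hk. unfold Tp, g.
  replace ((x - 0 + 1) / k) with ((x + 1) / k) by (f_equal; ring).
  assert (E1 : k * ((x + 1) / k) = x + 1) by (field; lra).
  assert (E2 : k * (4 - (x + 1) / k) = 4 * k - (x + 1)) by (field; lra).
  unfold Rmax, Rmin, Rabs.
  destruct (Rle_dec ((x + 1) / k) (4 - (x + 1) / k)); destruct (Rle_dec 0 _);
    destruct (Rcase_abs x); destruct (Rle_dec _ 0); try nra.
Qed.

Lemma sqrt_div_sq a l : 0 <= a -> 0 < l -> sqrt (a / (l * l)) = sqrt a / l.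
Proof. intros ha hl. rewrite sqrt_div_alt by nra. rewrite sqrt_square by lra. auto. Qed.

Lemma Rabs_le_inv x a : Rabs x <= a -> - a <= x <= a.
Proof. unfold Rabs. destruct (Rcase_abs x); intros; lra. Qed.

Lemma visc_bound (F : R -> R) (ue : R -> R -> R) (eps : R) :
  loc_lipschitz F -> (forall p, 0 <= p <= 1 -> F p = p) -> (forall p, -1 <= p <= 0 -> F p <= p) ->
  BUC_half ue -> visc_sol_viscous F eps g ue -> 0 < eps < 1/4 ->
  sqrt eps * (vf 0 1 - 1/64) <= ue 0 1.
Proof.
  intros Hlip H01 Hm10 HB Hv heps.
  set (q := sqrt eps).
  assert (hq : 0 < q) by (apply sqrt_lt_R0; lra).
  assert (hqq : q * q = eps) by (apply sqrt_sqrt; lra).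
  assert (hq2 : q < 1/2) by nra.
  destruct (Hlip 2) as [L HL].
  assert (hL : 0 <= L) by (apply (L_nonneg F L HL H01)).
  set (c1 := q / 512).
  assert (hc1 : 0 < c1 <= 1/1024) by (unfold c1; split; lra).
  set (r := Rmin (1/256) ((1 - 4 * eps) / 8)).
  assert (hr : 0 < r) by (unfold r; apply Rmin_pos; lra).
  assert (hr1 : r <= 1/256) by apply Rmin_l.
  assert (hr2 : r <= (1 - 4 * eps) / 8) by apply Rmin_r.
  set (tau := r * r). set (beta := r * r * r * c1).
  assert (htau : 0 < tau) by (unfold tau; nra).
  assert (hrr : 0 < r * r) by nra.
  assert (hbeta : 0 < beta) by (unfold beta; apply Rmult_lt_0_compat; [apply Rmult_lt_0_compat|]; lra).
  assert (hbt : beta <= tau).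
  { unfold beta, tau. assert (r * c1 <= 1) by nra.
    replace (r * r * r * c1) with ((r * r) * (r * c1)) by ring. nra. }
  pose proof (Tm_lower tau beta 1 hbeta ltac:(lra)) as T1l.
  pose proof (Tm_upper tau beta 1 hbeta ltac:(lra)) as T1u.
  pose proof (Tm_lower tau beta 0 hbeta ltac:(lra)) as T0l.
  pose proof (Tm_upper tau beta 0 hbeta ltac:(lra)) as T0u.
  set (lam := sqrt (Tm tau beta 1)).
  assert (hll : lam * lam = Tm tau beta 1) by (apply sqrt_sqrt; lra).
  assert (hlam : 1 <= lam).
  { unfold lam. apply Rle_trans with (sqrt 1); [rewrite sqrt_1; lra|apply sqrt_le_1_alt; lra]. }
  assert (hqlam : q * lam <= 1/2).
  { assert ((q * lam) * (q * lam) <= 1/4).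
    { replace ((q * lam) * (q * lam)) with (eps * Tm tau beta 1) by (rewrite <- hll, <- hqq; ring).
      assert (tau <= r) by (unfold tau; nra).
      assert (eps * Tm tau beta 1 <= eps * (1 + 2 * tau)) by (apply Rmult_le_compat_l; lra).
      nra. }
    nra. }
  set (al := c1 / (2 * (L + 3))).
  assert (hal : 0 < al) by (unfold al; apply Rdiv_lt_0_compat; lra).
  assert (halL : al * (L + 3) = c1 / 2) by (unfold al; field; lra).
  assert (hal1 : al <= c1) by nra.
  set (B := q * cc * sqrt (Tm tau beta 0)).
  pose proof cc_pos as hcc. pose proof cc_le as hcc2.
  assert (hB : 0 <= B) by (unfold B; pose proof (sqrt_pos (Tm tau beta 0)); apply Rmult_le_pos; nra).
  pose proof HB as [[M HM] _].
  assert (hM : 0 <= M) by (specialize (HM 0 0 ltac:(lra)); pose proof (Rabs_pos (ue 0 0)); lra).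
  assert (Hvss : forall x t, 0 <= t -> Rabs (vss (xi q lam x t) (th lam tau beta t)) <= 2 * cc * lam / r).
  { intros x t ht. pose proof (th_pos lam tau beta ltac:(lra) hbeta t) as hth.
    eapply Rle_trans; [apply vss_abs; auto|].
    assert (r / lam <= sqrt (th lam tau beta t)).
    { rewrite <- (sqrt_square (r / lam)) by (apply Rmult_le_pos; [lra|left; apply Rinv_0_lt_compat; lra]).
      apply sqrt_le_1_alt. unfold th. pose proof (Tm_lower tau beta t hbeta ltac:(lra)).
      unfold Rdiv. rewrite Rinv_mult. 
      apply Rle_trans with (tau * (/ lam * / lam)); [unfold tau; right; ring|].
      apply Rmult_le_compat_r; [|lra]. assert (0 < / lam) by (apply Rinv_0_lt_compat; lra). nra. }
    assert (0 < r / lam) by (apply Rdiv_lt_0_compat; lra).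
    replace (2 * cc * lam / r) with (2 * cc / (r / lam)) by (field; lra).
    unfold Rdiv. apply Rmult_le_compat_l; [lra|]. apply Rinv_le_contravar; lra. }
  assert (Hle : forall x t, 0 <= t -> Vb q lam tau beta c1 al B x t <= ue x t).
  { apply (comp_visc F eps ue _ (Vbt q lam tau beta c1) (Vbx q lam tau beta al) (Vbxx q lam tau beta al) Hv HB).
    - apply Vb_C12; lra.
    - apply (UC_lip _ (Vbx q lam tau beta al) (Vbt q lam tau beta c1) 2 (2 + 2 / r)).
      + lra.
      + assert (0 < 2 / r) by (apply Rdiv_lt_0_compat; lra). lra.
      + intros. apply Vb_dx; lra.
      + intros. apply Vb_dt; lra.
      + intros x t ht. unfold Vbx. pose proof (vs_range (xi q lam x t) (th lam tau beta t) (th_pos lam tau beta ltac:(lra) hbeta t)).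
        pose proof (Sq_ratio x). fold (Sqd x) in H0.
        assert (-1 <= Sqd x <= 1) by (unfold Rabs in H0; destruct (Rcase_abs (Sqd x)); lra).
        apply Rabs_le. nra.
      + intros x t ht. unfold Vbt.
        pose proof (vs_range (xi q lam x t) (th lam tau beta t) (th_pos lam tau beta ltac:(lra) hbeta t)).
        pose proof (Hvss x t ht).
        assert (0 <= Tm' tau beta t <= 1).
        { pose proof (Tm'_bound tau beta t hbeta ltac:(lra)). split; [|lra].
          unfold Tm'. pose proof (Tm_ge tau beta t hbeta). rewrite Rabs_right in H2 by lra.
          assert (0 < sqrt ((t + tau) * (t + tau) + beta * beta)) by lra.
          assert (0 <= (t + tau) / sqrt ((t + tau) * (t + tau) + beta * beta)) by (apply Rmult_le_pos; [lra|left; apply Rinv_0_lt_compat; lra]).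
          lra. }
        set (V := vss (xi q lam x t) (th lam tau beta t)) in *.
        set (T' := Tm' tau beta t) in *.
        assert (E : q * lam * V * (T' / (lam * lam)) = (q / lam) * V * T') by (field; lra).
        rewrite E.
        assert (HW : Rabs ((q / lam) * V * T') <= 2 / r).
        { rewrite !Rabs_mult. rewrite (Rabs_right T') by lra. rewrite (Rabs_right (q / lam)) by (left; apply Rdiv_lt_0_compat; lra).
          assert (K1 : q / lam * Rabs V <= q / lam * (2 * cc * lam / r)).
          { apply Rmult_le_compat_l; [left; apply Rdiv_lt_0_compat; lra|auto]. }
          replace (q / lam * (2 * cc * lam / r)) with (2 * q * cc / r) in K1 by (field; lra).
          assert (K2 : 2 * q * cc / r <= 2 / r).
          { unfold Rdiv. apply Rmult_le_compat_r; [left; apply Rinv_0_lt_compat; lra|nra]. }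
          pose proof (Rabs_pos V). assert (0 <= q / lam * Rabs V) by (apply Rmult_le_pos; [left; apply Rdiv_lt_0_compat; lra|lra]).
          nra. }
        apply Rabs_le_inv in HW. apply Rabs_le. lra.
    - intros x. unfold Vb.
      pose proof (th_pos lam tau beta ltac:(lra) hbeta 0) as hth.
      pose proof (vf_init (xi q lam x 0) (th lam tau beta 0) hth) as VI.
      assert (SQ : sqrt (th lam tau beta 0) = sqrt (Tm tau beta 0) / lam).
      { unfold th. apply sqrt_div_sq; lra. }
      rewrite SQ in VI.
      assert (K1 : q * lam * vf (xi q lam x 0) (th lam tau beta 0) <= q * lam * Tp (xi q lam x 0) + B).
      { apply Rmult_le_compat_l with (r := q * lam) in VI; [|nra].
        replace (q * lam * (Tp (xi q lam x 0) + sqrt (Tm tau beta 0) / lam * cc)) with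
          (q * lam * Tp (xi q lam x 0) + B) in VI by (unfold B; field; lra). exact VI. }
      pose proof (Tp_scale (q * lam) x ltac:(split; nra)) as K2. unfold xi in *.
      pose proof (Sq_ge1 x). assert (0 <= al * Sq x) by nra. lra.
    - intros x t ht. pose proof (th_pos lam tau beta ltac:(lra) hbeta t) as hth.
      pose proof (vs_range (xi q lam x t) (th lam tau beta t) hth) as VS.
      pose proof (Hvss x t ltac:(lra)) as HV.
      pose proof (Sq_ratio x) as SR. fold (Sqd x) in SR. apply Rabs_le_inv in SR.
      pose proof (Sqdd_range x) as SD.
      pose proof (Tm'_bound tau beta t hbeta ltac:(lra)) as TB.
      set (V := vss (xi q lam x t) (th lam tau beta t)) in *.
      set (T' := Tm' tau beta t) in *.
      set (vv := vs (xi q lam x t) (th lam tau beta t)) in *.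
      set (p := Vbx q lam tau beta al x t).
      assert (hp : p = vv - al * Sqd x) by auto.
      assert (Fp : F p <= p + (L + 1) * al).
      { apply (F_upper F L HL H01 Hm10 p al). split; lra. rewrite hp. nra. }
      assert (ID : Vbt q lam tau beta c1 x t + p - eps * Vbxx q lam tau beta al x t =
                   (q / lam) * V * (T' - 1) - c1 - al * Sqd x + eps * al * Sqdd x).
      { rewrite hp. unfold Vbt, Vbxx. fold V T' vv. rewrite <- hqq. field. split; lra. }
      assert (D1 : 1 - T' <= r * r * c1 * c1 / 4).
      { destruct TB as [_ TB]. eapply Rle_trans; [exact TB|].
        apply Rle_trans with (beta * beta / (4 * (tau * tau))).
        - unfold Rdiv. apply Rmult_le_compat_l; [nra|]. apply Rinv_le_contravar; [nra|].
          assert (tau <= t + tau) by lra. nra.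
        - right. unfold beta, tau. field. lra. }
      assert (E1 : (q / lam) * Rabs V <= 2 * q / r).
      { apply Rle_trans with (q / lam * (2 * cc * lam / r)).
        - apply Rmult_le_compat_l; [left; apply Rdiv_lt_0_compat; lra|auto].
        - replace (q / lam * (2 * cc * lam / r)) with ((2 * q / r) * cc) by (field; lra).
          assert (0 < 2 * q / r) by (apply Rdiv_lt_0_compat; lra). nra. }
      assert (E2 : Rabs ((q / lam) * V * (T' - 1)) <= q * r * c1 * c1 / 2).
      { rewrite !Rabs_mult. rewrite (Rabs_right (q / lam)) by (left; apply Rdiv_lt_0_compat; lra).
        rewrite (Rabs_left1 (T' - 1)) by lra.
        apply Rle_trans with ((2 * q / r) * (r * r * c1 * c1 / 4)).
        - apply Rmult_le_compat; try lra. apply Rmult_le_pos; [left; apply Rdiv_lt_0_compat; lra|apply Rabs_pos].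
        - right. field. lra. }
      apply Rabs_le_inv in E2.
      assert (E3 : q * r * c1 * c1 / 2 <= c1 / 4).
      { assert (q * r <= 1) by nra. assert (q * r * c1 <= 1/2) by nra. nra. }
      assert (E4 : eps * al * Sqdd x <= al) by (assert (eps * al <= al) by nra; nra).
      assert (E5 : - (al * Sqd x) <= al) by nra.
      fold p. nra.
    - exists ((M + 1) / al + 1), ((M + 1) / c1 + 1). split; [|split].
      + assert (0 <= (M + 1) / al) by (apply Rmult_le_pos; [lra|left; apply Rinv_0_lt_compat; lra]). lra.
      + assert (0 <= (M + 1) / c1) by (apply Rmult_le_pos; [lra|left; apply Rinv_0_lt_compat; lra]). lra.
      + intros x t ht hout. specialize (HM x t ht). apply Rabs_le_inv in HM.
        pose proof (th_pos lam tau beta ltac:(lra) hbeta t) as hth.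
        pose proof (vf_le2 (xi q lam x t) (th lam tau beta t) hth) as V2.
        pose proof (vf_init (xi q lam x t) (th lam tau beta t) hth) as _.
        assert (K0 : q * lam * vf (xi q lam x t) (th lam tau beta t) <= 1).
        { assert (vf (xi q lam x t) (th lam tau beta t) <= 2) by auto.
          destruct (Rle_dec 0 (vf (xi q lam x t) (th lam tau beta t))).
          - assert (0 <= q * lam) by nra. nra.
          - assert (0 <= q * lam) by nra. nra. }
        unfold Vb. pose proof (Sq_ge_abs x). pose proof (Sq_ge1 x).
        destruct hout as [hx|ht2].
        * assert (K1 : al * ((M + 1) / al + 1) <= al * Sq x) by (apply Rmult_le_compat_l; lra).
          replace (al * ((M + 1) / al + 1)) with (M + 1 + al) in K1 by (field; lra).
          assert (0 <= c1 * (1 + t)) by nra. lra.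
        * assert (K1 : c1 * ((M + 1) / c1 + 1) <= c1 * t) by (apply Rmult_le_compat_l; lra).
          replace (c1 * ((M + 1) / c1 + 1)) with (M + 1 + c1) in K1 by (field; lra).
          assert (0 <= al * Sq x) by nra. lra. }
  specialize (Hle 0 1 ltac:(lra)). unfold Vb in Hle.
  assert (X0 : xi q lam 0 1 = 0) by (unfold xi; field; lra).
  assert (TH1 : th lam tau beta 1 = 1) by (unfold th; rewrite <- hll; field; lra).
  rewrite X0, TH1 in Hle.
  assert (S0 : Sq 0 = 1) by (unfold Sq; replace (1 + 0 * 0) with 1 by ring; apply sqrt_1).
  rewrite S0 in Hle.
  pose proof vf01_bound as VB.
  assert (Kpos : 0 <= (exp 1 - 1) / (sqrt PI * exp 1)).
  { pose proof (exp_ineq1 1 ltac:(lra)). pose proof (exp_pos 1).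
    assert (0 < sqrt PI) by (apply sqrt_lt_R0; apply PI_RGT_0).
    apply Rmult_le_pos; [lra|]. left; apply Rinv_0_lt_compat. nra. }
  assert (hv0 : 0 <= vf 0 1) by lra.
  assert (B1 : B <= q / 128).
  { unfold B. assert (sqrt (Tm tau beta 0) <= 2 * r).
    { rewrite <- (sqrt_square (2 * r)) by lra. apply sqrt_le_1_alt. unfold tau in *. nra. }
    pose proof (sqrt_pos (Tm tau beta 0)).
    assert (cc * sqrt (Tm tau beta 0) <= 2 * r) by nra.
    assert (q * (cc * sqrt (Tm tau beta 0)) <= q * (2 * r)) by (apply Rmult_le_compat_l; lra).
    nra. }
  assert (q * vf 0 1 <= q * lam * vf 0 1).
  { assert (q * 1 <= q * lam) by (apply Rmult_le_compat_l; lra). nra. }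
  assert (al <= c1 / 6).
  { unfold al. unfold Rdiv. apply Rmult_le_compat_l; [lra|]. apply Rinv_le_contravar; lra. }
  fold q. unfold c1 in *. nra.
Qed.

Theorem theorem1p3 (F : R -> R) :
  loc_lipschitz F ->
  (forall p, 0 <= p <= 1 -> F p = p) ->
  (forall p, -1 <= p <= 0 -> F p <= p) ->
  forall (u : R -> R -> R),
    BUC_half u -> visc_sol_HJ F g u ->
  forall (eps : R) (ueps : R -> R -> R),
    0 < eps < 1/4 ->
    BUC_half ueps -> visc_sol_viscous F eps g ueps ->
    Rabs (ueps 0 1 - u 0 1) >= (exp 1 - 1) / (sqrt PI * exp 1) * sqrt eps.
Proof.
  intros Hlip H01 Hm10 u HBu Hu eps ueps heps HBe He.
  set (q := sqrt eps).
  assert (hq : 0 < q) by (apply sqrt_lt_R0; lra).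
  assert (hqq : q * q = eps) by (apply sqrt_sqrt; lra).
  assert (hq2 : q < 1/2) by nra.
  pose proof (HJ_bound F u (q / 256) Hlip H01 HBu Hu ltac:(split; lra)) as Hu1.
  pose proof (visc_bound F ueps eps Hlip H01 Hm10 HBe He heps) as He1. fold q in He1.
  pose proof vf01_bound as VB.
  set (K := (exp 1 - 1) / (sqrt PI * exp 1)) in *.
  assert (D : q * K <= ueps 0 1 - u 0 1).
  { assert (q * K <= q * (vf 0 1 - 1/32)) by (apply Rmult_le_compat_l; lra). lra. }
  assert (Kpos : 0 <= K).
  { unfold K. pose proof (exp_ineq1 1 ltac:(lra)). pose proof (exp_pos 1).
    assert (0 < sqrt PI) by (apply sqrt_lt_R0; apply PI_RGT_0).
    apply Rmult_le_pos; [lra|]. left; apply Rinv_0_lt_compat. nra. }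
  assert (0 <= q * K) by nra.
  rewrite Rabs_right by lra. lra.
Qed.
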